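(* Let $|\Psi_n\rangle\in\mathcal H^{\otimes n}$ be a permutation-invariant unit vector (i.e. $P_\pi|\Psi_n\rangle=|\Psi_n\rangle$ for all $\pi\in S_n$) and let $|\theta\rangle\in\mathcal H$ be a unit vector with $\langle\Psi_n|\theta^{\otimes n}\rangle\neq0$. Then for every $m\le n$ there is a unit vector $|\Psi_{n,m}\rangle\in\mathcal H^{\otimes n-m}$ such that $$|\Psi_{n,m}\rangle\langle\Psi_{n,m}|\le|\langle\Psi_n|\theta^{\otimes n}\rangle|^{-2}\,\mathrm{tr}_{1,\dots,m}(|\Psi_n\rangle\langle\Psi_n|),$$ and for every $r\le n-m$ there is an almost power state $|\Psi_{n,m,r}\rangle\in|\theta\rangle^{[\otimes,n-m,r]}$ (a unit vector) with $$\big\||\Psi_{n,m}\rangle\langle\Psi_{n,m}|-|\Psi_{n,m,r}\rangle\langle\Psi_{n,m,r}|\big\|_1\le2\sqrt2\,|\langle\Psi_n|\theta^{\otimes n}\rangle|^{-1}e^{-\frac{mr}{2n}}.$$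
   Context: $\mathcal H$ is a finite-dimensional Hilbert space; $P_\pi$ ($\pi\in S_n$) permutes the tensor factors of $\mathcal H^{\otimes n}$; $\mathrm{Sym}(\mathcal H^{\otimes n})$ is the symmetric subspace (vectors invariant under all $P_\pi$); $\mathrm{tr}_{1,\dots,m}$ is the partial trace over the first $m$ tensor factors. For a unit vector $|\theta\rangle\in\mathcal H$ and $0\le r\le n$, let $\mathcal V(\mathcal H^{\otimes n},|\theta\rangle^{\otimes n-r})=\{P_\pi(|\theta\rangle^{\otimes n-r}\otimes|\psi_r\rangle):\pi\in S_n,\ |\psi_r\rangle\in\mathcal H^{\otimes r}\}$, and define the set of almost power states $|\theta\rangle^{[\otimes,n,r]}=\mathrm{Sym}(\mathcal H^{\otimes n})\cap\mathrm{span}\,\mathcal V(\mathcal H^{\otimes n},|\theta\rangle^{\otimes n-r})$. *)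

(* Defs.v *)
From Stdlib Require Import Reals List Lra.
Import ListNotations.
Open Scope R_scope.

Definition C : Type := (R * R)%type.
Definition C0 : C := (0, 0).
Definition C1 : C := (1, 0).
Definition RtoC (x : R) : C := (x, 0).
Definition Cadd (a b : C) : C := (fst a + fst b, snd a + snd b).
Definition Copp (a : C) : C := (- fst a, - snd a).
Definition Csub (a b : C) : C := Cadd a (Copp b).
Definition Cmul (a b : C) : C :=
  (fst a * fst b - snd a * snd b, fst a * snd b + snd a * fst b).
Definition Cconj (a : C) : C := (fst a, - snd a).
Definition Cre (a : C) : R := fst a.
Definition Cim (a : C) : R := snd a.
Definition Cmod (a : C) : R := sqrt (fst a * fst a + snd a * snd a).
Definition Csum (l : list C) : C := fold_right Cadd C0 l.
Definition Cprod (l : list C) : C := fold_right Cmul C1 l.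

(* A basis index of H^{(x)k} is a word of length k over {0,...,d-1}. *)
Fixpoint words (d k : nat) : list (list nat) :=
  match k with
  | O => [[]]
  | S k' => flat_map (fun i => map (cons i) (words d k')) (seq 0 d)
  end.

(* vectors of H^{(x)k}: coordinates indexed by words (only words of length k
   over {0..d-1} matter); vectors of H are nat -> C on {0..d-1}. *)
Definition vec : Type := list nat -> C.
Definition vec1 : Type := nat -> C.

Definition inner (d k : nat) (u v : vec) : C :=
  Csum (map (fun w => Cmul (Cconj (u w)) (v w)) (words d k)).
Definition unit_vec (d k : nat) (v : vec) : Prop := inner d k v v = C1.

Definition inner1 (d : nat) (u v : vec1) : C :=
  Csum (map (fun i => Cmul (Cconj (u i)) (v i)) (seq 0 d)).
Definition unit_vec1 (d : nat) (v : vec1) : Prop := inner1 d v v = C1.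

Definition tpow (theta : vec1) : vec := fun w => Cprod (map theta w).

Definition tpow_tensor (k : nat) (theta : vec1) (psi : vec) : vec :=
  fun w => Cmul (Cprod (map theta (firstn k w))) (psi (skipn k w)).

Definition is_perm (n : nat) (pi : nat -> nat) : Prop :=
  (forall i, (i < n)%nat -> (pi i < n)%nat) /\
  (forall i j, (i < n)%nat -> (j < n)%nat -> pi i = pi j -> i = j).
Definition permute (n : nat) (pi : nat -> nat) (w : list nat) : list nat :=
  map (fun i => nth i w 0%nat) (map pi (seq 0 n)).
Definition Pperm (n : nat) (pi : nat -> nat) (v : vec) : vec :=
  fun w => v (permute n pi w).

Definition symmetric (d n : nat) (v : vec) : Prop :=
  forall pi, is_perm n pi -> forall w, In w (words d n) -> Pperm n pi v w = v w.

Definition inV (d n r : nat) (theta : vec1) (v : vec) : Prop :=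
  exists (pi : nat -> nat) (psi : vec), is_perm n pi /\
    forall w, In w (words d n) -> v w = Pperm n pi (tpow_tensor (n - r) theta psi) w.

Definition in_span (d n : nat) (S : vec -> Prop) (v : vec) : Prop :=
  exists l : list (C * vec), (forall p, In p l -> S (snd p)) /\
    forall w, In w (words d n) -> v w = Csum (map (fun p => Cmul (fst p) (snd p w)) l).

Definition almost_power (d n r : nat) (theta : vec1) (v : vec) : Prop :=
  symmetric d n v /\ in_span d n (inV d n r theta) v.

Definition op : Type := list nat -> list nat -> C.
Definition proj (v : vec) : op := fun w w' => Cmul (v w) (Cconj (v w')).
Definition Oscale (a : R) (A : op) : op := fun w w' => Cmul (RtoC a) (A w w').
Definition Osub (A B : op) : op := fun w w' => Csub (A w w') (B w w').
Definition Omul (d k : nat) (A B : op) : op :=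
  fun w w' => Csum (map (fun x => Cmul (A w x) (B x w')) (words d k)).
Definition Oadj (A : op) : op := fun w w' => Cconj (A w' w).
Definition Otrace (d k : nat) (A : op) : C := Csum (map (fun w => A w w) (words d k)).
Definition Oeq (d k : nat) (A B : op) : Prop :=
  forall w w', In w (words d k) -> In w' (words d k) -> A w w' = B w w'.

(* partial trace over the first m tensor factors: op on H^{(x)(m+k)} -> op on H^{(x)k} *)
Definition ptrace (d m : nat) (A : op) : op :=
  fun w w' => Csum (map (fun a => A (a ++ w) (a ++ w')) (words d m)).

Definition qform (d k : nat) (A : op) (v : vec) : C :=
  Csum (map (fun w => Csum (map (fun w' =>
     Cmul (Cconj (v w)) (Cmul (A w w') (v w'))) (words d k))) (words d k)).

Definition psd (d k : nat) (A : op) : Prop :=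
  forall v : vec, Cim (qform d k A v) = 0 /\ 0 <= Cre (qform d k A v).
Definition loewner_le (d k : nat) (A B : op) : Prop := psd d k (Osub B A).

(* ||A||_1 = tr sqrt(A^* A); t is the trace norm of A iff t = tr B for the
   (unique) positive semidefinite B with B B = A^* A. *)
Definition is_trnorm (d k : nat) (A : op) (t : R) : Prop :=
  exists B : op, psd d k B /\ Oeq d k (Omul d k B B) (Omul d k (Oadj A) A) /\
    t = Cre (Otrace d k B).

(* Main.v *)
From Pilot Require Import Defs.
From Stdlib Require Import Reals List.
Open Scope R_scope.
From Stdlib Require Import Lra Lia Permutation Bool.
Import Pilot.Defs.
Import ListNotations.
Open Scope bool_scope.
Open Scope R_scope.

Ltac Cunf := unfold Cadd, Copp, Csub, Cmul, Cconj, RtoC, C0, C1, Cre, Cim in *.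
Ltac Ceq := Cunf; simpl; apply injective_projections; simpl; ring.

Lemma Cadd_comm a b : Cadd a b = Cadd b a. Proof. Ceq. Qed.
Lemma Cadd_assoc a b c : Cadd a (Cadd b c) = Cadd (Cadd a b) c. Proof. Ceq. Qed.
Lemma Cadd_0_l a : Cadd C0 a = a. Proof. destruct a; Ceq. Qed.
Lemma Cadd_0_r a : Cadd a C0 = a. Proof. destruct a; Ceq. Qed.
Lemma Cmul_0_r a : Cmul a C0 = C0. Proof. Ceq. Qed.
Lemma Cmul_0_l a : Cmul C0 a = C0. Proof. Ceq. Qed.
Lemma Cmul_comm a b : Cmul a b = Cmul b a. Proof. Ceq. Qed.
Lemma Cmul_assoc a b c : Cmul a (Cmul b c) = Cmul (Cmul a b) c. Proof. Ceq. Qed.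
Lemma Cmul_1_l a : Cmul C1 a = a. Proof. destruct a; Ceq. Qed.
Lemma Cmul_1_r a : Cmul a C1 = a. Proof. destruct a; Ceq. Qed.
Lemma Cmul_add_distr_l a b c : Cmul a (Cadd b c) = Cadd (Cmul a b) (Cmul a c). Proof. Ceq. Qed.
Lemma Cmul_add_distr_r a b c : Cmul (Cadd b c) a = Cadd (Cmul b a) (Cmul c a). Proof. Ceq. Qed.
Lemma Cconj_add a b : Cconj (Cadd a b) = Cadd (Cconj a) (Cconj b). Proof. Ceq. Qed.
Lemma Cconj_mul a b : Cconj (Cmul a b) = Cmul (Cconj a) (Cconj b). Proof. Ceq. Qed.
Lemma Cconj_conj a : Cconj (Cconj a) = a. Proof. destruct a; Ceq. Qed.
Lemma Cconj_0 : Cconj C0 = C0. Proof. Ceq. Qed.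
Lemma Cconj_RtoC x : Cconj (RtoC x) = RtoC x. Proof. Ceq. Qed.

Definition Cn2 (z : C) : R := fst z * fst z + snd z * snd z.
Lemma Cn2_nonneg z : 0 <= Cn2 z. Proof. unfold Cn2; nra. Qed.
Lemma Cconj_mul_self z : Cmul (Cconj z) z = RtoC (Cn2 z).
Proof. unfold Cn2; Ceq. Qed.
Lemma Cmul_self_conj z : Cmul z (Cconj z) = RtoC (Cn2 z).
Proof. unfold Cn2; Ceq. Qed.
Lemma Cn2_mul a b : Cn2 (Cmul a b) = Cn2 a * Cn2 b.
Proof. unfold Cn2, Cmul; simpl; ring. Qed.
Lemma Cn2_conj a : Cn2 (Cconj a) = Cn2 a.
Proof. unfold Cn2, Cconj; simpl; ring. Qed.
Lemma Cn2_RtoC x : Cn2 (RtoC x) = x * x.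
Proof. unfold Cn2, RtoC; simpl; ring. Qed.
Lemma Cn2_zero z : Cn2 z = 0 -> z = C0.
Proof. destruct z as [a b]; unfold Cn2, C0; simpl; intro H.
  assert (a = 0) by nra. assert (b = 0) by nra. subst; auto. Qed.
Lemma Cmod_Cn2 z : Cmod z = sqrt (Cn2 z). Proof. reflexivity. Qed.
Lemma Cmod_sq z : Cmod z ^ 2 = Cn2 z.
Proof. rewrite Cmod_Cn2. simpl. rewrite Rmult_1_r. apply sqrt_sqrt, Cn2_nonneg. Qed.
Lemma Cn2_pos z : z <> C0 -> 0 < Cn2 z.
Proof. intro H. destruct (Cn2_nonneg z); auto. exfalso; apply H, Cn2_zero; auto. Qed.

Lemma RtoC_add x y : RtoC (x + y) = Cadd (RtoC x) (RtoC y). Proof. Ceq. Qed.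
Lemma RtoC_mul x y : RtoC (x * y) = Cmul (RtoC x) (RtoC y). Proof. Ceq. Qed.

Section Sums.
Context {A : Type}.

Lemma Csum_app (l1 l2 : list C) : Csum (l1 ++ l2) = Cadd (Csum l1) (Csum l2).
Proof. induction l1; simpl. rewrite Cadd_0_l; auto. rewrite IHl1, Cadd_assoc; auto. Qed.

Lemma Csum_ext (f g : A -> C) l : (forall x, In x l -> f x = g x) ->
  Csum (map f l) = Csum (map g l).
Proof. induction l; simpl; intros; auto. rewrite H, IHl; auto. Qed.

Lemma Csum_add (f g : A -> C) l :
  Csum (map (fun x => Cadd (f x) (g x)) l) = Cadd (Csum (map f l)) (Csum (map g l)).
Proof. induction l; simpl. Ceq. rewrite IHl. Ceq. Qed.

Lemma Csum_scal a (f : A -> C) l :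
  Csum (map (fun x => Cmul a (f x)) l) = Cmul a (Csum (map f l)).
Proof. induction l; simpl. Ceq. rewrite IHl. Ceq. Qed.

Lemma Csum_scal_r a (f : A -> C) l :
  Csum (map (fun x => Cmul (f x) a) l) = Cmul (Csum (map f l)) a.
Proof. induction l; simpl. Ceq. rewrite IHl. Ceq. Qed.

Lemma Csum_zero (f : A -> C) l : (forall x, In x l -> f x = C0) -> Csum (map f l) = C0.
Proof. induction l; simpl; intros; auto. rewrite H, IHl; auto. Ceq. Qed.

Lemma Csum_conj (f : A -> C) l : Cconj (Csum (map f l)) = Csum (map (fun x => Cconj (f x)) l).
Proof. induction l; simpl. Ceq. rewrite Cconj_add, IHl; auto. Qed.

Lemma Csum_perm (f : A -> C) l l' : Permutation l l' -> Csum (map f l) = Csum (map f l').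
Proof. induction 1; simpl; auto. rewrite IHPermutation; auto.
  rewrite !Cadd_assoc, (Cadd_comm (f y)); auto. congruence. Qed.

Lemma Csum_map {B} (f : B -> C) (g : A -> B) l : Csum (map f (map g l)) = Csum (map (fun x => f (g x)) l).
Proof. rewrite map_map; auto. Qed.

Lemma Csum_flat_map {B} (f : B -> C) (g : A -> list B) l :
  Csum (map f (flat_map g l)) = Csum (map (fun x => Csum (map f (g x))) l).
Proof. induction l; simpl; auto. rewrite map_app, Csum_app, IHl; auto. Qed.

Lemma Csum_RtoC (f : A -> R) l :
  Csum (map (fun x => RtoC (f x)) l) = RtoC (fold_right Rplus 0 (map f l)).
Proof. induction l; simpl. Ceq. rewrite IHl. Ceq. Qed.

Lemma Csum_filter (P : A -> bool) (f : A -> C) l :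
  Csum (map f (filter P l)) = Csum (map (fun x => if P x then f x else C0) l).
Proof. induction l; simpl; auto. destruct (P a); simpl; rewrite IHl; auto. rewrite Cadd_0_l; auto. Qed.
End Sums.

Lemma Csum_swap {A B} (f : A -> B -> C) l1 l2 :
  Csum (map (fun x => Csum (map (fun y => f x y) l2)) l1) =
  Csum (map (fun y => Csum (map (fun x => f x y) l1)) l2).
Proof. induction l1; simpl. symmetry; apply Csum_zero; auto.
  rewrite IHl1, <- Csum_add; auto. Qed.

Lemma Csum_delta {A} (eqd : forall x y : A, {x = y} + {x <> y}) (f : A -> C) l a :
  NoDup l -> In a l -> Csum (map (fun x => if eqd x a then f x else C0) l) = f a.
Proof. induction l; simpl; intros Hn Hi. contradiction.
  inversion Hn; subst. destruct (eqd a0 a).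
  - subst. rewrite Csum_zero. apply Cadd_0_r. intros x Hx. destruct (eqd x a); auto. subst; contradiction.
  - destruct Hi. congruence. rewrite IHl; auto. apply Cadd_0_l. Qed.

Definition Rsum (l : list R) : R := fold_right Rplus 0 l.
Section RSums.
Context {A : Type}.
Lemma Rsum_ext (f g : A -> R) l : (forall x, In x l -> f x = g x) -> Rsum (map f l) = Rsum (map g l).
Proof. induction l; simpl; intros; auto. rewrite H, IHl; auto. Qed.
Lemma Rsum_le (f g : A -> R) l : (forall x, In x l -> f x <= g x) -> Rsum (map f l) <= Rsum (map g l).
Proof. unfold Rsum; induction l; simpl; intros. lra. pose proof (H a (or_introl eq_refl)).
  assert (fold_right Rplus 0 (map f l) <= fold_right Rplus 0 (map g l)) by (apply IHl; auto). lra. Qed.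
Lemma Rsum_nonneg (f : A -> R) l : (forall x, In x l -> 0 <= f x) -> 0 <= Rsum (map f l).
Proof. intros. replace 0 with (Rsum (map (fun _ => 0) l)). apply Rsum_le; auto.
  induction l; simpl; auto. rewrite IHl; auto. lra. intros; apply H; simpl; auto. Qed.
Lemma Rsum_scal a (f : A -> R) l : Rsum (map (fun x => a * f x) l) = a * Rsum (map f l).
Proof. induction l; simpl. ring. rewrite IHl; ring. Qed.
Lemma Rsum_add (f g : A -> R) l : Rsum (map (fun x => f x + g x) l) = Rsum (map f l) + Rsum (map g l).
Proof. induction l; simpl. ring. rewrite IHl; ring. Qed.
Lemma Rsum_const a l : Rsum (map (fun _ : A => a) l) = INR (length l) * a.
Proof. induction l; simpl. ring. rewrite IHl. destruct (length l); simpl; ring. Qed.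
Lemma Rsum_perm (f : A -> R) l l' : Permutation l l' -> Rsum (map f l) = Rsum (map f l').
Proof. induction 1; simpl; auto; try lra. Qed.
Lemma Rsum_in (f : A -> R) l a : (forall x, In x l -> 0 <= f x) -> In a l -> f a <= Rsum (map f l).
Proof. induction l; simpl; intros H Hi. contradiction.
  destruct Hi. subst. assert (0 <= Rsum (map f l)) by (apply Rsum_nonneg; auto). unfold Rsum in *; simpl; lra.
  assert (0 <= f a0) by auto. assert (f a <= Rsum (map f l)) by auto. unfold Rsum in *; simpl; lra. Qed.
End RSums.
Lemma Rsum_swap {A B} (f : A -> B -> R) l1 l2 :
  Rsum (map (fun x => Rsum (map (fun y => f x y) l2)) l1) =
  Rsum (map (fun y => Rsum (map (fun x => f x y) l1)) l2).
Proof. induction l1; simpl. induction l2; simpl; auto. rewrite <- IHl2; ring.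
  rewrite IHl1, <- Rsum_add; auto. Qed.
Lemma Rsum_flat_map {A B} (f : B -> R) (g : A -> list B) l :
  Rsum (map f (flat_map g l)) = Rsum (map (fun x => Rsum (map f (g x))) l).
Proof. induction l; simpl; auto. rewrite map_app. rewrite <- IHl.
  unfold Rsum. rewrite fold_right_app. 
  generalize (fold_right Rplus 0 (map f (flat_map g l))). induction (map f (g a)); simpl; intros; auto. lra. rewrite IHl0; ring. Qed.

Lemma words_In d k w : In w (words d k) <-> length w = k /\ (forall a, In a w -> (a < d)%nat).
Proof. revert w; induction k; simpl; intros w.
  - split. intros [H|[]]; subst; simpl; split; auto; intros a []. intros [H _]; destruct w; simpl in *; auto; discriminate.
  - rewrite in_flat_map. split.
    + intros [i [Hi Hw]]. rewrite in_map_iff in Hw. destruct Hw as [u [<- Hu]].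
      apply IHk in Hu. destruct Hu. apply in_seq in Hi. simpl; split. congruence.
      intros a [<-|Ha]; auto; lia.
    + intros [Hl Ha]. destruct w as [|i u]; simpl in *. discriminate.
      exists i; split. apply in_seq; split; [lia|]. simpl. apply Ha; auto.
      apply in_map. apply IHk. split; auto. Qed.

Lemma NoDup_map_in {A B} (f : A -> B) l :
  NoDup l -> (forall x y, In x l -> In y l -> f x = f y -> x = y) -> NoDup (map f l).
Proof. induction 1; simpl; intros Hi; constructor.
  - rewrite in_map_iff. intros [y [Hy Hin]]. assert (y = x) by (apply Hi; auto). subst; auto.
  - apply IHNoDup; auto. Qed.

Lemma words_NoDup d k : NoDup (words d k).
Proof. induction k; simpl. constructor; auto. constructor.
  induction (seq_NoDup d 0); simpl. constructor.
  apply NoDup_app. apply NoDup_map_in; auto. intros; congruence. auto.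
  intros w Hw1 Hw2. rewrite in_map_iff in Hw1. destruct Hw1 as [u [<- _]].
  rewrite in_flat_map in Hw2. destruct Hw2 as [j [Hj Hw]]. rewrite in_map_iff in Hw.
  destruct Hw as [v [Hv _]]. inversion Hv; subst. contradiction. Qed.

Lemma Csum_words_S d k (f : list nat -> C) :
  Csum (map f (words d (S k))) = Csum (map (fun i => Csum (map (fun w => f (i :: w)) (words d k))) (seq 0 d)).
Proof. simpl. rewrite Csum_flat_map. apply Csum_ext; intros. rewrite map_map; auto. Qed.

Lemma Rsum_words_S d k (f : list nat -> R) :
  Rsum (map f (words d (S k))) = Rsum (map (fun i => Rsum (map (fun w => f (i :: w)) (words d k))) (seq 0 d)).
Proof. simpl. rewrite Rsum_flat_map. apply Rsum_ext; intros. rewrite map_map; auto. Qed.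

Lemma Csum_words_app d m k (f : list nat -> C) :
  Csum (map f (words d (m + k))) =
  Csum (map (fun a => Csum (map (fun u => f (a ++ u)) (words d k))) (words d m)).
Proof. revert f; induction m; intros f; simpl plus.
  - simpl. rewrite Cadd_0_r; auto.
  - rewrite !Csum_words_S. apply Csum_ext; intros i _. rewrite IHm. auto. Qed.

Lemma Rsum_words_app d m k (f : list nat -> R) :
  Rsum (map f (words d (m + k))) =
  Rsum (map (fun a => Rsum (map (fun u => f (a ++ u)) (words d k))) (words d m)).
Proof. revert f; induction m; intros f; simpl plus.
  - simpl. unfold Rsum; simpl. rewrite Rplus_0_r; auto.
  - rewrite !Rsum_words_S. apply Rsum_ext; intros i _. rewrite IHm. auto. Qed.

Lemma inner_S d k u v : inner d (S k) u v =
  Csum (map (fun i => inner d k (fun w => u (i :: w)) (fun w => v (i :: w))) (seq 0 d)).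
Proof. unfold inner. rewrite Csum_words_S. auto. Qed.

Lemma nth_permute n pi w i : (i < n)%nat -> nth i (permute n pi w) 0%nat = nth (pi i) w 0%nat.
Proof. intro H. unfold permute. rewrite map_map.
  rewrite nth_indep with (d' := nth (pi 0%nat) w 0%nat) by (rewrite length_map, length_seq; auto).
  rewrite map_nth with (f := fun x => nth (pi x) w 0%nat). rewrite seq_nth; auto. Qed.

Lemma length_permute n pi w : length (permute n pi w) = n.
Proof. unfold permute; rewrite !length_map, length_seq; auto. Qed.

Lemma perm_list n pi : is_perm n pi -> Permutation (map pi (seq 0 n)) (seq 0 n).
Proof. intros [H1 H2]. apply NoDup_Permutation.
  - apply NoDup_map_in. apply seq_NoDup. intros x y Hx Hy. apply in_seq in Hx, Hy. apply H2; lia.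
  - apply seq_NoDup.
  - assert (incl (map pi (seq 0 n)) (seq 0 n)).
    { intros x Hx. rewrite in_map_iff in Hx. destruct Hx as [y [<- Hy]]. apply in_seq in Hy. apply in_seq. split. lia. simpl. apply H1; lia. }
    intros x; split; intros Hx. auto.
    apply (NoDup_length_incl (l := map pi (seq 0 n)) (l' := seq 0 n)); auto.
    apply NoDup_map_in. apply seq_NoDup. intros a b Ha Hb. apply in_seq in Ha, Hb. apply H2; lia.
    rewrite length_map; auto. Qed.

Lemma perm_surj n pi j : is_perm n pi -> (j < n)%nat -> exists i, (i < n)%nat /\ pi i = j.
Proof. intros Hp Hj. assert (In j (map pi (seq 0 n))).
  { apply Permutation_in with (seq 0 n). apply Permutation_sym, perm_list; auto. apply in_seq; lia. }
  rewrite in_map_iff in H. destruct H as [i [Hi Hin]]. apply in_seq in Hin. exists i; split; auto; lia. Qed.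

Lemma map_nth_seq (w : list nat) : map (fun i => nth i w 0%nat) (seq 0 (length w)) = w.
Proof. apply nth_ext with (d := 0%nat) (d' := 0%nat). rewrite length_map, length_seq; auto.
  intros i Hi. rewrite length_map, length_seq in Hi.
  rewrite nth_indep with (d' := nth 0 w 0%nat) by (rewrite length_map, length_seq; auto).
  rewrite map_nth with (f := fun i => nth i w 0%nat). rewrite seq_nth; auto. Qed.

Lemma permute_Permutation n pi w : is_perm n pi -> length w = n -> Permutation (permute n pi w) w.
Proof. intros Hp Hl. pose proof (perm_list n pi Hp) as Hp'. unfold permute. rewrite map_map.
  transitivity (map (fun i => nth i w 0%nat) (seq 0 n)).
  apply Permutation_map with (f := fun i => nth i w 0%nat) in Hp'. rewrite map_map in Hp'. exact Hp'. rewrite <- Hl, map_nth_seq; auto. Qed.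

Lemma permute_words d n pi w : is_perm n pi -> In w (words d n) -> In (permute n pi w) (words d n).
Proof. intros Hp Hw. apply words_In in Hw. destruct Hw as [Hl Ha]. apply words_In. split.
  apply length_permute. intros a Ha'. apply Ha. apply Permutation_in with (permute n pi w); auto.
  apply permute_Permutation; auto. Qed.

Lemma permute_inj n pi x w : is_perm n pi -> length x = n -> length w = n ->
  permute n pi x = permute n pi w -> x = w.
Proof. intros Hp Hx Hw He. apply nth_ext with (d := 0%nat) (d' := 0%nat). congruence.
  intros j Hj. destruct (perm_surj n pi j Hp) as [i [Hi <-]]. lia.
  rewrite <- !nth_permute with (n := n); auto. rewrite He; auto. Qed.

Lemma permute_words_perm d n pi : is_perm n pi -> Permutation (map (permute n pi) (words d n)) (words d n).
Proof. intros Hp. assert (NoDup (map (permute n pi) (words d n))).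
  { apply NoDup_map_in. apply words_NoDup. intros x y Hx Hy. apply words_In in Hx, Hy.
    apply (permute_inj n pi); tauto. }
  assert (incl (map (permute n pi) (words d n)) (words d n)).
  { intros x Hx. rewrite in_map_iff in Hx. destruct Hx as [y [<- Hy]]. apply permute_words; auto. }
  apply NoDup_Permutation; [exact H | apply words_NoDup |]. intro x; split; [apply H0|].
  apply (NoDup_length_incl (l := map (permute n pi) (words d n)) (l' := words d n)); auto. rewrite length_map; auto. Qed.

Lemma Csum_permute d n pi (f : list nat -> C) : is_perm n pi ->
  Csum (map (fun w => f (permute n pi w)) (words d n)) = Csum (map f (words d n)).
Proof. intros Hp. rewrite <- Csum_map. apply Csum_perm, permute_words_perm; auto. Qed.

Lemma Rsum_permute d n pi (f : list nat -> R) : is_perm n pi ->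
  Rsum (map (fun w => f (permute n pi w)) (words d n)) = Rsum (map f (words d n)).
Proof. intros Hp. rewrite <- map_map. apply Rsum_perm, permute_words_perm; auto. Qed.

Lemma Cprod_perm (l l' : list C) : Permutation l l' -> Cprod l = Cprod l'.
Proof. induction 1; simpl; auto. rewrite IHPermutation; auto.
  rewrite !Cmul_assoc, (Cmul_comm y); auto. congruence. Qed.

Lemma Csum_mul {A B} (f : A -> C) (g : B -> C) l l' :
  Cmul (Csum (map f l)) (Csum (map g l')) =
  Csum (map (fun x => Csum (map (fun y => Cmul (f x) (g y)) l')) l).
Proof. induction l; simpl. apply Cmul_0_l.
  rewrite Cmul_add_distr_r, IHl, Csum_scal. auto. Qed.

Definition kron (x y : list nat) : C := if list_eq_dec Nat.eq_dec x y then C1 else C0.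

Lemma Csum_kron d k (f : list nat -> C) y : In y (words d k) ->
  Csum (map (fun x => Cmul (f x) (kron x y)) (words d k)) = f y.
Proof. intros Hy. rewrite <- (Csum_delta (list_eq_dec Nat.eq_dec) f (words d k) y (words_NoDup d k) Hy).
  apply Csum_ext. intros x _. unfold kron. destruct (list_eq_dec Nat.eq_dec x y). apply Cmul_1_r. apply Cmul_0_r. Qed.

Lemma Csum_kron_l d k (f : list nat -> C) x : In x (words d k) ->
  Csum (map (fun y => Cmul (f y) (kron x y)) (words d k)) = f x.
Proof. intros Hx. rewrite <- (Csum_kron d k f x Hx). apply Csum_ext. intros y _. unfold kron.
  destruct (list_eq_dec Nat.eq_dec x y), (list_eq_dec Nat.eq_dec y x); subst; congruence. Qed.

Definition e0 : vec1 := fun i => if Nat.eq_dec i 0 then C1 else C0.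

Section Transform.
Variable d : nat.
Variable U : nat -> nat -> C.
Variable theta : vec1.
Hypothesis Ucol : forall j j', (j < d)%nat -> (j' < d)%nat ->
  Csum (map (fun i => Cmul (Cconj (U i j)) (U i j')) (seq 0 d)) = if Nat.eq_dec j j' then C1 else C0.
Hypothesis Urow : forall i i', (i < d)%nat -> (i' < d)%nat ->
  Csum (map (fun j => Cmul (U i j) (Cconj (U i' j))) (seq 0 d)) = if Nat.eq_dec i i' then C1 else C0.
Hypothesis U0 : forall j, (j < d)%nat -> Cconj (U 0 j) = theta j.

Fixpoint pr (w x : list nat) : C :=
  match w, x with i :: w', j :: x' => Cmul (U i j) (pr w' x') | _, _ => C1 end.

Definition T (k : nat) (v : vec) : vec := fun w => Csum (map (fun x => Cmul (pr w x) (v x)) (words d k)).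
Definition Tadj (k : nat) (v : vec) : vec := fun z => Csum (map (fun w => Cmul (Cconj (pr w z)) (v w)) (words d k)).

Lemma pr_col k x y : In x (words d k) -> In y (words d k) ->
  Csum (map (fun w => Cmul (Cconj (pr w x)) (pr w y)) (words d k)) = kron x y.
Proof. revert x y; induction k; intros x y Hx Hy.
  - simpl in Hx, Hy. destruct Hx as [<-|[]]; destruct Hy as [<-|[]]. simpl. unfold kron; simpl. Ceq.
  - apply words_In in Hx, Hy. destruct x as [|a x], y as [|b y]; simpl in Hx, Hy; try (exfalso; lia).
    destruct Hx as [Hx Hax], Hy as [Hy Hby].
    assert (Hxw : In x (words d k)) by (apply words_In; split; auto; lia).
    assert (Hyw : In y (words d k)) by (apply words_In; split; auto; lia).
    rewrite Csum_words_S. simpl pr.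
    transitivity (Csum (map (fun i => Cmul (Cmul (Cconj (U i a)) (U i b))
        (Csum (map (fun w => Cmul (Cconj (pr w x)) (pr w y)) (words d k)))) (seq 0 d))).
    { apply Csum_ext; intros i _. rewrite <- Csum_scal. apply Csum_ext; intros w _.
      rewrite Cconj_mul. Ceq. }
    rewrite IHk; auto. rewrite Csum_scal_r, Ucol; auto.
    unfold kron. destruct (Nat.eq_dec a b), (list_eq_dec Nat.eq_dec x y), (list_eq_dec Nat.eq_dec (a::x) (b::y));
      subst; try congruence; Ceq. Qed.

Lemma pr_row k w w' : In w (words d k) -> In w' (words d k) ->
  Csum (map (fun x => Cmul (pr w x) (Cconj (pr w' x))) (words d k)) = kron w w'.
Proof. revert w w'; induction k; intros x y Hx Hy.
  - simpl in Hx, Hy. destruct Hx as [<-|[]]; destruct Hy as [<-|[]]. simpl. unfold kron; simpl. Ceq.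
  - apply words_In in Hx, Hy. destruct x as [|a x], y as [|b y]; simpl in Hx, Hy; try (exfalso; lia).
    destruct Hx as [Hx Hax], Hy as [Hy Hby].
    assert (Hxw : In x (words d k)) by (apply words_In; split; auto; lia).
    assert (Hyw : In y (words d k)) by (apply words_In; split; auto; lia).
    rewrite Csum_words_S. simpl pr.
    transitivity (Csum (map (fun i => Cmul (Cmul (U a i) (Cconj (U b i)))
        (Csum (map (fun w => Cmul (pr x w) (Cconj (pr y w))) (words d k)))) (seq 0 d))).
    { apply Csum_ext; intros i _. rewrite <- Csum_scal. apply Csum_ext; intros w _.
      rewrite Cconj_mul. Ceq. }
    rewrite IHk; auto. rewrite Csum_scal_r, Urow; auto.
    unfold kron. destruct (Nat.eq_dec a b), (list_eq_dec Nat.eq_dec x y), (list_eq_dec Nat.eq_dec (a::x) (b::y));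
      subst; try congruence; Ceq. Qed.

Lemma inner_T k u v : inner d k (T k u) (T k v) = inner d k u v.
Proof. unfold inner, T.
  transitivity (Csum (map (fun w => Csum (map (fun x => Csum (map (fun y =>
     Cmul (Cmul (Cconj (u x)) (v y)) (Cmul (Cconj (pr w x)) (pr w y))) (words d k))) (words d k))) (words d k))).
  { apply Csum_ext; intros w _. rewrite Csum_conj, Csum_mul. apply Csum_ext; intros x _.
    apply Csum_ext; intros y _. rewrite Cconj_mul; Ceq. }
  rewrite Csum_swap. apply Csum_ext; intros x Hx.
  rewrite Csum_swap. 
  transitivity (Csum (map (fun y => Cmul (Cmul (Cconj (u x)) (v y)) (kron x y)) (words d k))).
  { apply Csum_ext; intros y Hy. rewrite Csum_scal, pr_col; auto. }
  rewrite Csum_kron_l; auto. Qed.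

Lemma inner_Tadj k u v : inner d k (Tadj k u) (Tadj k v) = inner d k u v.
Proof. unfold inner, Tadj.
  transitivity (Csum (map (fun w => Csum (map (fun x => Csum (map (fun y =>
     Cmul (Cmul (Cconj (u x)) (v y)) (Cmul (pr x w) (Cconj (pr y w)))) (words d k))) (words d k))) (words d k))).
  { apply Csum_ext; intros w _. rewrite Csum_conj, Csum_mul. apply Csum_ext; intros x _.
    apply Csum_ext; intros y _. rewrite Cconj_mul, Cconj_conj; Ceq. }
  rewrite Csum_swap. apply Csum_ext; intros x Hx.
  rewrite Csum_swap.
  transitivity (Csum (map (fun y => Cmul (Cmul (Cconj (u x)) (v y)) (kron x y)) (words d k))).
  { apply Csum_ext; intros y Hy. rewrite Csum_scal, pr_row; auto. }
  rewrite Csum_kron_l; auto. Qed.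

Lemma inner_adj k u v : inner d k u (Tadj k v) = inner d k (T k u) v.
Proof. unfold inner, Tadj, T.
  transitivity (Csum (map (fun z => Csum (map (fun w => Cmul (Cconj (u z)) (Cmul (Cconj (pr w z)) (v w))) (words d k))) (words d k))).
  { apply Csum_ext; intros; rewrite Csum_scal; auto. }
  rewrite Csum_swap. apply Csum_ext; intros w _. rewrite Csum_conj, <- Csum_scal_r.
  apply Csum_ext; intros z _. rewrite Cconj_mul; Ceq. Qed.

Lemma T_Tadj k y w : In w (words d k) -> T k (Tadj k y) w = y w.
Proof. intros Hw. unfold T, Tadj.
  transitivity (Csum (map (fun x => Cmul (y x) (kron x w)) (words d k))).
  2: apply Csum_kron; auto.
  transitivity (Csum (map (fun x => Csum (map (fun z => Cmul (y x) (Cmul (pr w z) (Cconj (pr x z)))) (words d k))) (words d k))).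
  { rewrite Csum_swap. apply Csum_ext; intros z _. rewrite <- Csum_scal. apply Csum_ext; intros; Ceq. }
  apply Csum_ext; intros x Hx. rewrite Csum_scal, pr_row; auto. unfold kron.
  destruct (list_eq_dec Nat.eq_dec w x), (list_eq_dec Nat.eq_dec x w); subst; try congruence. Qed.

Lemma T_ext k u v : (forall w, In w (words d k) -> u w = v w) -> forall w, T k u w = T k v w.
Proof. intros H w. unfold T. apply Csum_ext; intros. rewrite H; auto. Qed.
Lemma Tadj_ext k u v : (forall w, In w (words d k) -> u w = v w) -> forall w, Tadj k u w = Tadj k v w.
Proof. intros H w. unfold Tadj. apply Csum_ext; intros. rewrite H; auto. Qed.

Lemma pr_app a b u x : length a = length b -> pr (a ++ u) (b ++ x) = Cmul (pr a b) (pr u x).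
Proof. revert b; induction a; destruct b; simpl; intros; try discriminate. rewrite Cmul_1_l; auto.
  rewrite IHa; auto. apply Cmul_assoc. Qed.

Lemma pr_prod w x : length w = length x ->
  pr w x = Cprod (map (fun i => U (nth i w 0%nat) (nth i x 0%nat)) (seq 0 (length w))).
Proof. revert x; induction w; destruct x; simpl; intros; try discriminate; auto.
  rewrite IHw by lia. f_equal. rewrite <- seq_shift, map_map. auto. Qed.

Lemma pr_permute n pi w x : is_perm n pi -> length w = n -> length x = n ->
  pr (permute n pi w) (permute n pi x) = pr w x.
Proof. intros Hp Hw Hx. rewrite !pr_prod by (rewrite ?length_permute; congruence).
  rewrite length_permute, Hw.
  transitivity (Cprod (map (fun i => U (nth i w 0%nat) (nth i x 0%nat)) (map pi (seq 0 n)))).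
  { rewrite map_map. f_equal. apply map_ext_in. intros i Hi. apply in_seq in Hi.
    rewrite !nth_permute by lia. auto. }
  apply Cprod_perm, Permutation_map, perm_list; auto. Qed.

Lemma T_Pperm n pi v w : is_perm n pi -> In w (words d n) ->
  T n (Pperm n pi v) w = Pperm n pi (T n v) w.
Proof. intros Hp Hw. unfold T, Pperm. symmetry. rewrite <- (Csum_permute d n pi _ Hp).
  apply Csum_ext; intros x Hx. apply words_In in Hx, Hw. rewrite pr_permute; tauto. Qed.

Lemma Tadj_Pperm n pi v w : is_perm n pi -> In w (words d n) ->
  Tadj n (Pperm n pi v) w = Pperm n pi (Tadj n v) w.
Proof. intros Hp Hw. unfold Tadj, Pperm. symmetry. rewrite <- (Csum_permute d n pi _ Hp).
  apply Csum_ext; intros x Hx. apply words_In in Hx, Hw. rewrite pr_permute; tauto. Qed.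

Lemma T_symmetric n v : symmetric d n v -> symmetric d n (T n v).
Proof. intros Hs pi Hp w Hw. rewrite <- T_Pperm; auto. apply T_ext. intros; apply Hs; auto. Qed.
Lemma Tadj_symmetric n v : symmetric d n v -> symmetric d n (Tadj n v).
Proof. intros Hs pi Hp w Hw. rewrite <- Tadj_Pperm; auto. apply Tadj_ext. intros; apply Hs; auto. Qed.

Lemma tpow_e0 a : In a (words d (length a)) -> tpow e0 a = kron (repeat 0%nat (length a)) a.
Proof. induction a as [|x a IHa]; simpl; intros H. unfold kron; simpl; auto.
  unfold tpow in *. simpl. rewrite IHa. unfold e0, kron.
  destruct (list_eq_dec Nat.eq_dec (repeat 0%nat (length a)) a) as [E1|E1];
  destruct (list_eq_dec Nat.eq_dec (0%nat :: repeat 0%nat (length a)) (x :: a)) as [E2|E2];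
  destruct (Nat.eq_dec x 0) as [E3|E3]; try Ceq.
  - inversion E2; congruence.
  - subst. rewrite E1 in E2. congruence.
  - inversion E2; congruence.
  - inversion E2; congruence.
  - change (In (x :: a) (words d (length (x :: a)))) in H.
    apply words_In in H. apply words_In. simpl in H. split; auto. intros; apply H; auto. Qed.

Lemma pr_repeat0 z : (forall a, In a z -> (a < d)%nat) ->
  Cconj (pr (repeat 0%nat (length z)) z) = tpow theta z.
Proof. induction z; simpl; intros. Ceq. unfold tpow in *; simpl. rewrite Cconj_mul, U0, IHz; auto. Qed.

Lemma repeat_words k : (0 < d)%nat -> In (repeat 0%nat k) (words d k).
Proof. intros. apply words_In. rewrite repeat_length. split; auto. intros a Ha.
  apply repeat_spec in Ha. lia. Qed.

Lemma Tadj_tpow_tensor k j psi z : (0 < d)%nat -> (j <= k)%nat -> In z (words d k) ->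
  Tadj k (tpow_tensor j e0 psi) z = tpow_tensor j theta (Tadj (k - j) psi) z.
Proof. intros Hd Hj Hz. unfold Tadj, tpow_tensor.
  replace k with (j + (k - j))%nat at 1 by lia. rewrite Csum_words_app.
  apply words_In in Hz. destruct Hz as [Hzl Hza].
  transitivity (Csum (map (fun a => Cmul (Cmul (Cconj (pr a (firstn j z))) (tpow e0 a))
     (Csum (map (fun u => Cmul (Cconj (pr u (skipn j z))) (psi u)) (words d (k - j))))) (words d j))).
  { apply Csum_ext; intros a Ha. rewrite <- Csum_scal. apply Csum_ext; intros u Hu.
    assert (length a = j) by (apply words_In in Ha; tauto).
    replace (pr (a ++ u) z) with (pr (a ++ u) (firstn j z ++ skipn j z)) by (rewrite firstn_skipn; auto).
    rewrite pr_app by (rewrite length_firstn; lia).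
    rewrite firstn_app, H, Nat.sub_diag, firstn_O, app_nil_r, (firstn_all2 a) by lia.
    rewrite skipn_app, H, Nat.sub_diag, skipn_O, (skipn_all2 a) by lia. simpl app.
    rewrite Cconj_mul. unfold tpow. Ceq. }
  rewrite Csum_scal_r. f_equal.
  transitivity (Csum (map (fun a => Cmul (Cconj (pr a (firstn j z))) (kron a (repeat 0%nat j))) (words d j))).
  { apply Csum_ext; intros a Ha. rewrite tpow_e0. assert (length a = j) by (apply words_In in Ha; tauto).
    subst. unfold kron. destruct (list_eq_dec Nat.eq_dec), (list_eq_dec Nat.eq_dec); subst; try congruence.
    assert (length a = j) by (apply words_In in Ha; tauto). subst; auto. }
  rewrite Csum_kron by (apply repeat_words; auto).
  replace j with (length (firstn j z)) at 1 by (rewrite length_firstn; lia).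
  rewrite pr_repeat0. auto. intros a Ha. apply Hza. rewrite <- (firstn_skipn j z). apply in_or_app; left; auto. Qed.

End Transform.

Section Contr.
Variable d : nat.
Variable U : nat -> nat -> C.
Variable theta : vec1.
Hypothesis U0 : forall j, (j < d)%nat -> Cconj (U 0 j) = theta j.

Definition contr (m : nat) (Psi : vec) : vec :=
  fun u => Csum (map (fun a => Cmul (Cconj (tpow theta a)) (Psi (a ++ u))) (words d m)).

Lemma T_contr m k Psi u : In u (words d k) ->
  T d U k (contr m Psi) u = T d U (m + k) Psi (repeat 0%nat m ++ u).
Proof. intros Hu. unfold T, contr. rewrite Csum_words_app.
  transitivity (Csum (map (fun x => Csum (map (fun a => Cmul (Cconj (tpow theta a)) (Cmul (pr U u x) (Psi (a ++ x)))) (words d m))) (words d k))).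
  { apply Csum_ext; intros x _. rewrite Cmul_comm, <- Csum_scal_r. apply Csum_ext; intros; Ceq. }
  rewrite Csum_swap. apply Csum_ext; intros a Ha. apply Csum_ext; intros x Hx.
  assert (length a = m) by (apply words_In in Ha; tauto).
  rewrite pr_app by (rewrite repeat_length; auto).
  replace (Cconj (tpow theta a)) with (pr U (repeat 0%nat m) a). Ceq.
  rewrite <- H, <- pr_repeat0 with (U := U) (d := d); auto. rewrite Cconj_conj; auto.
  apply words_In in Ha; tauto. Qed.
End Contr.

Definition isz (a : nat) : bool := Nat.eqb a 0.
Definition nz (w : list nat) : nat := length (filter (fun a => negb (isz a)) w).
Definition zeros (w : list nat) : nat := length (filter isz w).

Lemma nz_zeros w : (nz w + zeros w)%nat = length w.
Proof. unfold nz, zeros; induction w; simpl; auto. destruct (isz a); simpl; lia. Qed.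
Lemma nz_app a b : nz (a ++ b) = (nz a + nz b)%nat.
Proof. unfold nz. rewrite filter_app, length_app; auto. Qed.
Lemma nz_perm a b : Permutation a b -> nz a = nz b.
Proof. unfold nz; induction 1; simpl; auto.
  destruct (negb (isz x)); simpl; auto. destruct (negb (isz x)), (negb (isz y)); simpl; auto. congruence. Qed.
Lemma nz_repeat0 m : nz (repeat 0%nat m) = 0%nat.
Proof. induction m; simpl; auto. Qed.

Definition fz (j : nat) (w : list nat) : bool := forallb (fun i => isz (nth i w 0%nat)) (seq 0 j).
Lemma fz_S j w : fz (S j) w = fz j w && isz (nth j w 0%nat).
Proof. unfold fz. rewrite seq_S, forallb_app. simpl. rewrite andb_true_r; auto. Qed.

Lemma fz_firstn j w : fz j w = true -> (j <= length w)%nat -> firstn j w = repeat 0%nat j.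
Proof. intros H Hl. unfold fz in H. rewrite forallb_forall in H.
  apply nth_ext with (d := 0%nat) (d' := 0%nat). rewrite length_firstn, repeat_length; lia.
  intros i Hi. rewrite length_firstn in Hi. rewrite nth_firstn.
  destruct (Nat.ltb_spec i j); [|lia]. rewrite nth_repeat.
  specialize (H i). unfold isz in H. apply Nat.eqb_eq. apply H. apply in_seq; lia. Qed.

Lemma fz_app0 m u : fz m (repeat 0%nat m ++ u) = true.
Proof. unfold fz. apply forallb_forall. intros i Hi. apply in_seq in Hi.
  rewrite app_nth1 by (rewrite repeat_length; lia). rewrite nth_repeat. auto. Qed.

Lemma fz_words d m a : In a (words d m) -> fz m a = true -> a = repeat 0%nat m.
Proof. intros Ha Hf. apply words_In in Ha. destruct Ha as [Hl _].
  rewrite <- (firstn_all2 (n := m) a) by lia. apply fz_firstn; auto; lia. Qed.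

Lemma zeros_skipn w j : INR (zeros (skipn j w)) =
  Rsum (map (fun i => if isz (nth i w 0%nat) then 1 else 0) (seq j (length w - j))).
Proof. revert j; induction w as [|a w IH]; intros j.
  - destruct j; simpl; auto.
  - destruct j as [|j].
    + simpl skipn. simpl length. rewrite Nat.sub_0_r. simpl seq.
      specialize (IH 0%nat). simpl skipn in IH. rewrite Nat.sub_0_r in IH.
      rewrite <- (seq_shift _ 0). simpl map. rewrite map_map. unfold Rsum in *. simpl fold_right.
      change (fun x : nat => if isz (nth (S x) (a :: w) 0%nat) then 1 else 0) with
        (fun x : nat => if isz (nth x w 0%nat) then 1 else 0).
      rewrite <- IH. unfold zeros. simpl filter.
      destruct (isz a); simpl length; rewrite ?S_INR; lra.
    + simpl skipn. simpl length. simpl Nat.sub. rewrite IH.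
      rewrite <- (seq_shift _ j), map_map. auto. Qed.

Definition tau (j i : nat) : nat -> nat :=
  fun x => if Nat.eq_dec x j then i else if Nat.eq_dec x i then j else x.

Lemma tau_perm n j i : (j < n)%nat -> (i < n)%nat -> is_perm n (tau j i).
Proof. intros Hj Hi. split.
  - intros x Hx. unfold tau. destruct (Nat.eq_dec x j), (Nat.eq_dec x i); lia.
  - intros x y Hx Hy. unfold tau. destruct (Nat.eq_dec x j), (Nat.eq_dec x i), (Nat.eq_dec y j), (Nat.eq_dec y i); lia. Qed.

Lemma Rsum_delta {A} (eqd : forall x y : A, {x = y} + {x <> y}) (f : A -> R) l a :
  NoDup l -> In a l -> Rsum (map (fun x => if eqd x a then f x else 0) l) = f a.
Proof. induction l; simpl; intros Hn Hi. contradiction.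
  inversion Hn; subst. destruct (eqd a0 a).
  - subst. assert (Rsum (map (fun x => if eqd x a then f x else 0) l) = 0).
    { transitivity (Rsum (map (fun _ => 0) l)). apply Rsum_ext.
      intros x Hx. destruct (eqd x a); auto. subst; contradiction. rewrite Rsum_const; ring. }
    unfold Rsum in *; simpl; lra.
  - destruct Hi. congruence. specialize (IHl H2 H). unfold Rsum in *; simpl; lra. Qed.

Lemma forallb_ext_in' {A} (f g : A -> bool) l : (forall x, In x l -> f x = g x) -> forallb f l = forallb g l.
Proof. induction l; simpl; intros; auto. rewrite H, IHl; auto. Qed.

Section Counting.
Variable d n r : nat.
Variable g : list nat -> R.
Hypothesis g_nonneg : forall w, 0 <= g w.
Hypothesis g_sym : forall j i w, (j < n)%nat -> (i < n)%nat -> In w (words d n) ->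
  g (permute n (tau j i) w) = g w.

Definition Bj (j : nat) : R :=
  Rsum (map (fun w => if fz j w && Nat.ltb r (nz w) then g w else 0) (words d n)).

Lemma Bj_nonneg j : 0 <= Bj j.
Proof. apply Rsum_nonneg. intros. destruct (_ && _); auto; lra. Qed.

Lemma Bj_step j : (j < n)%nat -> INR (n - j) * Bj (S j) <= (INR (n - j) - INR (S r)) * Bj j.
Proof. intros Hj.
  set (S0 := Rsum (map (fun w => (if fz j w && Nat.ltb r (nz w) then g w else 0) * INR (zeros (skipn j w))) (words d n))).
  assert (H1 : S0 <= (INR (n - j) - INR (S r)) * Bj j).
  { unfold S0, Bj. rewrite <- Rsum_scal. apply Rsum_le. intros w Hw.
    destruct (fz j w) eqn:Hf; destruct (Nat.ltb_spec r (nz w)); cbn [andb]; try lra.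
    apply words_In in Hw. destruct Hw as [Hl _].
    assert (Hz : (zeros (skipn j w) + nz w)%nat = (n - j)%nat).
    { rewrite <- (firstn_skipn j w) at 2. rewrite nz_app, fz_firstn, nz_repeat0 by (auto; lia).
      pose proof (nz_zeros (skipn j w)) as Hnz. rewrite length_skipn in Hnz; lia. }
    assert (INR (zeros (skipn j w)) <= INR (n - j) - INR (S r)).
    { rewrite <- Hz, plus_INR. assert (INR (S r) <= INR (nz w)) by (apply le_INR; lia). lra. }
    pose proof (g_nonneg w). nra. }
  assert (H2 : S0 = INR (n - j) * Bj (S j)).
  { unfold S0. transitivity (Rsum (map (fun i => Bj (S j)) (seq j (n - j)))).
    2: rewrite Rsum_const, length_seq; auto.
    transitivity (Rsum (map (fun w => Rsum (map (fun i =>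
        if fz j w && Nat.ltb r (nz w) && isz (nth i w 0%nat) then g w else 0) (seq j (n - j)))) (words d n))).
    { apply Rsum_ext; intros w Hw. apply words_In in Hw. destruct Hw as [Hl _].
      rewrite zeros_skipn, Hl, <- Rsum_scal. apply Rsum_ext; intros i _.
      destruct (fz j w && _), (isz _); simpl; lra. }
    rewrite Rsum_swap. apply Rsum_ext; intros i Hi. apply in_seq in Hi.
    unfold Bj. rewrite <- (Rsum_permute d n (tau j i)) by (apply tau_perm; lia).
    apply Rsum_ext; intros w Hw.
    assert (Hl : length w = n) by (apply words_In in Hw; tauto).
    assert (Hfz : fz j (permute n (tau j i) w) = fz j w).
    { unfold fz. apply forallb_ext_in'. intros x Hx. apply in_seq in Hx.
      rewrite nth_permute by lia. unfold tau. destruct (Nat.eq_dec x j), (Nat.eq_dec x i); try lia; auto. }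
    rewrite Hfz, (nz_perm _ w (permute_Permutation n _ w (tau_perm n j i Hj ltac:(lia)) Hl)).
    rewrite nth_permute by lia. rewrite g_sym by (auto; lia). rewrite fz_S.
    unfold tau. destruct (Nat.eq_dec i j) as [->|]; [|destruct (Nat.eq_dec i i); [|lia]];
    destruct (fz j w), (Nat.ltb r (nz w)), (isz (nth j w 0%nat)); simpl; auto. }
  lra. Qed.

Lemma Bj_pow m : (S r <= n)%nat -> (m <= n)%nat ->
  Bj m <= (1 - INR (S r) / INR n) ^ m * Bj 0.
Proof. intros Hr. induction m; intros Hm. simpl; lra.
  assert (Hn : 0 < INR n) by (apply lt_0_INR; lia).
  assert (Hrho : 0 <= 1 - INR (S r) / INR n).
  { assert (INR (S r) <= INR n) by (apply le_INR; lia).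
    assert (INR (S r) / INR n <= 1). { apply Rmult_le_reg_r with (INR n); auto. unfold Rdiv. rewrite Rmult_assoc, Rinv_l; lra. } lra. }
  pose proof (Bj_step m ltac:(lia)) as Hs. pose proof (Bj_nonneg m). pose proof (Bj_nonneg (S m)).
  assert (Bj (S m) <= (1 - INR (S r) / INR n) * Bj m).
  { assert (Hnm : 0 < INR (n - m)) by (apply lt_0_INR; lia).
    assert (INR (n - m) <= INR n) by (apply le_INR; lia).
    assert (Bj (S m) <= (1 - INR (S r) / INR (n - m)) * Bj m).
    { apply Rmult_le_reg_l with (INR (n - m)); auto.
      replace (INR (n - m) * ((1 - INR (S r) / INR (n - m)) * Bj m)) with ((INR (n - m) - INR (S r)) * Bj m).
      auto. field. lra. }
    assert (INR (S r) / INR n <= INR (S r) / INR (n - m)).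
    { unfold Rdiv. apply Rmult_le_compat_l. apply pos_INR. apply Rinv_le_contravar; auto. }
    nra. }
  simpl. specialize (IHm ltac:(lia)). rewrite Rmult_assoc.
  apply Rle_trans with ((1 - INR (S r) / INR n) * Bj m); auto. apply Rmult_le_compat_l; auto. Qed.
End Counting.

Lemma inner_self d k v : inner d k v v = RtoC (Rsum (map (fun w => Cn2 (v w)) (words d k))).
Proof. unfold inner. rewrite <- Csum_RtoC. apply Csum_ext; intros. apply Cconj_mul_self. Qed.

Lemma inner_conj d k u v : Cconj (inner d k u v) = inner d k v u.
Proof. unfold inner. rewrite Csum_conj. apply Csum_ext; intros. rewrite Cconj_mul, Cconj_conj. apply Cmul_comm. Qed.

Lemma Rsum_Cn2_nonneg d k v : 0 <= Rsum (map (fun w => Cn2 (v w)) (words d k)).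
Proof. apply Rsum_nonneg; intros; apply Cn2_nonneg. Qed.

Lemma CS {A} (f g : A -> C) l :
  Cn2 (Csum (map (fun a => Cmul (Cconj (f a)) (g a)) l)) <=
  Rsum (map (fun a => Cn2 (f a)) l) * Rsum (map (fun a => Cn2 (g a)) l).
Proof.
  set (S := Csum (map (fun a => Cmul (Cconj (f a)) (g a)) l)).
  set (Af := Rsum (map (fun a => Cn2 (f a)) l)).
  set (Bg := Rsum (map (fun a => Cn2 (g a)) l)).
  assert (HA : 0 <= Af) by (apply Rsum_nonneg; intros; apply Cn2_nonneg).
  assert (HB : 0 <= Bg) by (apply Rsum_nonneg; intros; apply Cn2_nonneg).
  destruct HA as [HA|HA].
  - set (t := Cmul S (RtoC (/ Af))).
    set (h := fun a => Cadd (g a) (Cmul (Copp t) (f a))).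
    assert (H0 : 0 <= Rsum (map (fun a => Cn2 (h a)) l)) by (apply Rsum_nonneg; intros; apply Cn2_nonneg).
    assert (Hx : RtoC (Rsum (map (fun a => Cn2 (h a)) l)) =
       Cadd (Cadd (RtoC Bg) (Cmul (Copp t) (Cconj S))) (Cadd (Cmul (Copp (Cconj t)) S) (Cmul (Cmul (Cconj t) t) (RtoC Af)))).
    { rewrite <- Csum_RtoC. unfold Bg, Af. rewrite <- !Csum_RtoC.
      transitivity (Csum (map (fun a => Cadd (Cadd (RtoC (Cn2 (g a))) (Cmul (Copp t) (Cmul (Cconj (g a)) (f a))))
        (Cadd (Cmul (Copp (Cconj t)) (Cmul (Cconj (f a)) (g a))) (Cmul (Cmul (Cconj t) t) (RtoC (Cn2 (f a)))))) l)).
      { apply Csum_ext; intros a _. unfold h, Cn2. Ceq. }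
      rewrite !Csum_add, !Csum_scal. f_equal. f_equal. f_equal. unfold S. rewrite Csum_conj.
      apply Csum_ext; intros. rewrite Cconj_mul, Cconj_conj; apply Cmul_comm. }
    assert (Hr : Rsum (map (fun a => Cn2 (h a)) l) = Bg - Cn2 S / Af).
    { change (Rsum (map (fun a => Cn2 (h a)) l)) with (fst (RtoC (Rsum (map (fun a => Cn2 (h a)) l)))).
      rewrite Hx. unfold t, Cn2. Cunf. simpl. field. lra. }
    rewrite Hr in H0. apply Rmult_le_reg_r with (/ Af). apply Rinv_0_lt_compat; auto.
    replace (Af * Bg * / Af) with Bg by (field; lra). unfold Rdiv in H0. lra.
  - assert (Hf : forall a, In a l -> f a = C0).
    { intros a Ha. apply Cn2_zero. apply Rle_antisym; [|apply Cn2_nonneg].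
      rewrite HA. unfold Af. apply (Rsum_in (fun a => Cn2 (f a))); auto. intros; apply Cn2_nonneg. }
    unfold S. rewrite Csum_zero. unfold Cn2, C0; simpl; nra.
    intros a Ha; rewrite Hf; auto. Ceq. Qed.

Lemma qform_sub d k A B v : qform d k (Osub A B) v = Csub (qform d k A v) (qform d k B v).
Proof. unfold qform, Osub.
  transitivity (Csum (map (fun w => Cadd (Csum (map (fun w' => Cmul (Cconj (v w)) (Cmul (A w w') (v w'))) (words d k)))
    (Cmul (Copp C1) (Csum (map (fun w' => Cmul (Cconj (v w)) (Cmul (B w w') (v w'))) (words d k))))) (words d k))).
  { apply Csum_ext; intros. rewrite <- Csum_scal, <- Csum_add. apply Csum_ext; intros. Ceq. }
  rewrite Csum_add, Csum_scal. unfold Csub. Ceq. Qed.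

Lemma qform_scale d k a A v : qform d k (Oscale a A) v = Cmul (RtoC a) (qform d k A v).
Proof. unfold qform, Oscale. rewrite <- Csum_scal. apply Csum_ext; intros.
  rewrite <- Csum_scal. apply Csum_ext; intros. Ceq. Qed.

Lemma qform_proj d k y v : qform d k (proj y) v = RtoC (Cn2 (inner d k v y)).
Proof. rewrite <- Cmul_self_conj. unfold qform, proj. rewrite inner_conj. unfold inner.
  rewrite Csum_mul. apply Csum_ext; intros. apply Csum_ext; intros. Ceq. Qed.

Definition Oadd (A B : op) : op := fun w w' => Cadd (A w w') (B w w').
Lemma qform_add d k A B v : qform d k (Oadd A B) v = Cadd (qform d k A v) (qform d k B v).
Proof. unfold qform, Oadd. rewrite <- Csum_add. apply Csum_ext; intros.
  rewrite <- Csum_add. apply Csum_ext; intros. Ceq. Qed.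

Lemma qform_ptrace d m k Psi v : qform d k (ptrace d m (proj Psi)) v =
  RtoC (Rsum (map (fun a => Cn2 (inner d k v (fun u => Psi (a ++ u)))) (words d m))).
Proof. rewrite <- Csum_RtoC.
  transitivity (Csum (map (fun a => qform d k (proj (fun u => Psi (a ++ u))) v) (words d m))).
  2: apply Csum_ext; intros; apply qform_proj.
  unfold qform, ptrace. 
  transitivity (Csum (map (fun w => Csum (map (fun w' => Csum (map (fun a => Cmul (Cconj (v w))
     (Cmul (proj Psi (a ++ w) (a ++ w')) (v w'))) (words d m))) (words d k))) (words d k))).
  { apply Csum_ext; intros. apply Csum_ext; intros. rewrite <- Csum_scal_r, <- Csum_scal.
    apply Csum_ext; intros. Ceq. }
  transitivity (Csum (map (fun w => Csum (map (fun a => Csum (map (fun w' => Cmul (Cconj (v w))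
     (Cmul (proj Psi (a ++ w) (a ++ w')) (v w'))) (words d k))) (words d m))) (words d k))).
  { apply Csum_ext; intros. apply (Csum_swap (fun w' a => Cmul (Cconj (v x))
     (Cmul (proj Psi (a ++ x) (a ++ w')) (v w')))). }
  apply (Csum_swap (fun w a => Csum (map (fun w' => Cmul (Cconj (v w))
     (Cmul (proj Psi (a ++ w) (a ++ w')) (v w'))) (words d k)))). Qed.

Lemma inner_lin_r d k u a b c : inner d k u (fun x => Cadd (a x) (Cmul c (b x))) =
  Cadd (inner d k u a) (Cmul c (inner d k u b)).
Proof. unfold inner. rewrite <- Csum_scal, <- Csum_add. apply Csum_ext; intros. Ceq. Qed.
Lemma inner_lin_l d k y a b c : inner d k (fun x => Cadd (a x) (Cmul c (b x))) y =
  Cadd (inner d k a y) (Cmul (Cconj c) (inner d k b y)).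
Proof. unfold inner. rewrite <- Csum_scal, <- Csum_add. apply Csum_ext; intros. Ceq. Qed.

Lemma Rsum_Cn2_zero d k w : Rsum (map (fun x => Cn2 (w x)) (words d k)) = 0 ->
  forall x, In x (words d k) -> w x = C0.
Proof. intros H x Hx. apply Cn2_zero. apply Rle_antisym; [|apply Cn2_nonneg].
  rewrite <- H. apply (Rsum_in (fun x => Cn2 (w x))); auto. intros; apply Cn2_nonneg. Qed.

Lemma trnorm_pure d k u v : inner d k u u = C1 -> inner d k v v = C1 ->
  is_trnorm d k (Osub (proj u) (proj v)) (2 * sqrt (1 - Cn2 (inner d k u v))).
Proof. intros Hu Hv.
  set (s := inner d k u v).
  set (w := fun x => Cadd (v x) (Cmul (Copp s) (u x))).
  assert (Hvu : inner d k v u = Cconj s) by (unfold s; rewrite inner_conj; auto).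
  assert (Huw : inner d k u w = C0).
  { unfold w. rewrite inner_lin_r, Hu. fold s. Ceq. }
  assert (Hwu : inner d k w u = C0) by (rewrite <- inner_conj, Huw; Ceq).
  assert (Hww : inner d k w w = RtoC (1 - Cn2 s)).
  { unfold w at 1. rewrite inner_lin_l, Huw. unfold w. rewrite inner_lin_r, Hv, Hvu. unfold Cn2. Ceq. }
  set (ll := 1 - Cn2 s).
  assert (Hll : Rsum (map (fun x => Cn2 (w x)) (words d k)) = ll).
  { rewrite inner_self in Hww. inversion Hww; auto. }
  assert (Hll0 : 0 <= ll) by (rewrite <- Hll; apply Rsum_Cn2_nonneg).
  set (lam := sqrt ll). set (mu := / lam).
  assert (Hlam : lam * lam = ll) by (apply sqrt_sqrt; auto).
  assert (Hlam0 : 0 <= lam) by apply sqrt_pos.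
  assert (Hmu0 : 0 <= mu).
  { unfold mu. destruct Hlam0 as [H|H]. left; apply Rinv_0_lt_compat; auto. rewrite <- H, Rinv_0; lra. }
  assert (Hmul : mu * ll = lam).
  { unfold mu. rewrite <- Hlam. destruct Hlam0 as [H|H]. field; lra. rewrite <- H, Rinv_0; ring. }
  exists (Oadd (Oscale lam (proj u)) (Oscale mu (proj w))). split; [|split].
  - intros x. rewrite qform_add, !qform_scale, !qform_proj.
    pose proof (Cn2_nonneg (inner d k x u)). pose proof (Cn2_nonneg (inner d k x w)).
    unfold Cim, Cre; simpl. split; [ring|nra].
  - intros x y Hx Hy. unfold Omul, Oadd, Oscale, Oadj, Osub, proj, Csub.
    transitivity (Cadd (Cadd (Cmul (Cmul (RtoC (lam * lam)) (Cmul (u x) (Cconj (u y)))) (inner d k u u))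
       (Cmul (Cmul (RtoC (lam * mu)) (Cmul (u x) (Cconj (w y)))) (inner d k u w)))
       (Cadd (Cmul (Cmul (RtoC (mu * lam)) (Cmul (w x) (Cconj (u y)))) (inner d k w u))
       (Cmul (Cmul (RtoC (mu * mu)) (Cmul (w x) (Cconj (w y)))) (inner d k w w)))).
    { unfold inner. rewrite <- !Csum_scal, <- !Csum_add. apply Csum_ext; intros z _. Ceq. }
    transitivity (Cadd (Cadd (Cmul (Cmul (u x) (Cconj (u y))) (inner d k u u))
       (Cmul (Copp (Cmul (u x) (Cconj (v y)))) (inner d k u v)))
       (Cadd (Cmul (Copp (Cmul (v x) (Cconj (u y)))) (inner d k v u))
       (Cmul (Cmul (v x) (Cconj (v y))) (inner d k v v)))).
    2: { unfold inner. rewrite <- !Csum_scal, <- !Csum_add. apply Csum_ext; intros z _. Ceq. }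
    rewrite Hu, Hv, Huw, Hwu, Hww, Hvu. fold s.
    destruct Hll0 as [Hp|Hz].
    + replace (mu * mu) with (/ ll) by (unfold mu, lam; rewrite <- Rinv_mult, sqrt_sqrt; lra).
      rewrite Hlam. unfold w, ll, Cn2. Cunf. simpl. apply injective_projections; simpl; field; unfold ll, Cn2 in Hp; lra.
    + assert (Hw0 : forall z, In z (words d k) -> w z = C0) by (apply Rsum_Cn2_zero; lra).
      assert (Hvx : v x = Cmul s (u x)). { pose proof (Hw0 x Hx) as H. unfold w in H. Cunf.
        destruct (v x), (u x), s. simpl in *. inversion H. apply injective_projections; simpl; lra. }
      assert (Hvy : v y = Cmul s (u y)). { pose proof (Hw0 y Hy) as H. unfold w in H. Cunf.
        destruct (v y), (u y), s. simpl in *. inversion H. apply injective_projections; simpl; lra. }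
      rewrite (Hw0 x Hx), (Hw0 y Hy), Hvx, Hvy, Hlam. unfold ll, Cn2 in *. Cunf. simpl.
      apply injective_projections; simpl; nra.
  - unfold Otrace, Oadd, Oscale, proj.
    transitivity (Cre (Cadd (Cmul (RtoC lam) (inner d k u u)) (Cmul (RtoC mu) (inner d k w w)))).
    + rewrite Hu, Hww. fold ll. unfold Cre, RtoC, Cmul, Cadd, C1; simpl.
      replace (mu * ll) with lam by auto. ring_simplify. nra.
    + f_equal. unfold inner. rewrite <- !Csum_scal, <- Csum_add. apply Csum_ext; intros. Ceq. Qed.

Lemma filter_map_comm {A B} (f : A -> B) (p : B -> bool) l :
  map f (filter (fun i => p (f i)) l) = filter p (map f l).
Proof. induction l; simpl; auto. destruct (p (f a)); simpl; rewrite IHl; auto. Qed.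

Lemma filter_partition_length {A} (p : A -> bool) l :
  (length (filter p l) + length (filter (fun x => negb (p x)) l))%nat = length l.
Proof. induction l; simpl; auto. destruct (p a); simpl; lia. Qed.

Lemma filter_isz w : filter isz w = repeat 0%nat (zeros w).
Proof. unfold zeros. induction w; simpl; auto. destruct (isz a) eqn:E; simpl; auto.
  unfold isz in E. apply Nat.eqb_eq in E. subst. f_equal; auto. Qed.

Lemma sort_perm d k r w : (0 < d)%nat -> In w (words d k) -> (nz w <= r)%nat -> (r <= k)%nat ->
  exists pi psi0, is_perm k pi /\ forall x, In x (words d k) ->
    kron x w = tpow_tensor (k - r) e0 psi0 (permute k pi x).
Proof. intros Hd Hw Hnz Hr. assert (Hwl : length w = k) by (apply words_In in Hw; tauto).
  set (P := fun i => isz (nth i w 0%nat)).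
  set (L := filter P (seq 0 k) ++ filter (fun i => negb (P i)) (seq 0 k)).
  assert (HL : length L = k).
  { unfold L. rewrite length_app, filter_partition_length, length_seq; auto. }
  assert (HLin : forall i, In i L -> (i < k)%nat).
  { intros i Hi. unfold L in Hi. apply in_app_or in Hi. destruct Hi as [Hi|Hi];
    apply filter_In in Hi; destruct Hi as [Hi _]; apply in_seq in Hi; lia. }
  assert (HND : NoDup L).
  { unfold L. apply NoDup_app. apply NoDup_filter, seq_NoDup. apply NoDup_filter, seq_NoDup.
    intros i H1 H2. apply filter_In in H1, H2. destruct H1 as [_ H1], H2 as [_ H2]. rewrite H1 in H2. discriminate. }
  set (pi := fun i => nth i L 0%nat).
  assert (Hmap : map pi (seq 0 k) = L). { unfold pi. rewrite <- HL. apply map_nth_seq. }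
  assert (Hperm : forall x, permute k pi x = map (fun i => nth i x 0%nat) L).
  { intros x. unfold permute. rewrite Hmap. auto. }
  assert (Hpi : is_perm k pi).
  { split. intros i Hi. apply HLin. unfold pi. apply nth_In. lia.
    intros i j Hi Hj He. eapply NoDup_nth; eauto; lia. }
  set (s := permute k pi w).
  assert (Hs : s = repeat 0%nat (zeros w) ++ filter (fun a => negb (isz a)) w).
  { unfold s. rewrite Hperm. unfold L. rewrite map_app. unfold P.
    rewrite (filter_map_comm (fun i => nth i w 0%nat) isz).
    rewrite (filter_map_comm (fun i => nth i w 0%nat) (fun a => negb (isz a))).
    rewrite <- Hwl, map_nth_seq, filter_isz. auto. }
  assert (Hz : (k - r <= zeros w)%nat).
  { pose proof (nz_zeros w). lia. }
  assert (Hfs : firstn (k - r) s = repeat 0%nat (k - r)).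
  { rewrite Hs, firstn_app, repeat_length. replace (k - r - zeros w)%nat with 0%nat by lia.
    rewrite firstn_O, app_nil_r. 
    apply nth_ext with (d := 0%nat) (d' := 0%nat). rewrite length_firstn, !repeat_length; lia.
    intros i Hi. rewrite length_firstn, repeat_length in Hi. rewrite nth_firstn.
    destruct (Nat.ltb_spec i (k - r)); [|lia]. rewrite !nth_repeat; auto. }
  exists pi, (fun y => kron y (skipn (k - r) s)). split; auto.
  intros x Hx. assert (Hxl : length x = k) by (apply words_In in Hx; tauto).
  assert (Hpx : In (permute k pi x) (words d k)) by (apply permute_words; auto).
  unfold tpow_tensor. change (Cprod (map e0 (firstn (k - r) (permute k pi x)))) with (tpow e0 (firstn (k - r) (permute k pi x))). rewrite (tpow_e0 d).
  2: { apply words_In. rewrite length_firstn. apply words_In in Hpx. destruct Hpx as [Hl Ha].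
       split. lia. intros a Ha'. apply Ha. rewrite <- (firstn_skipn (k - r) (permute k pi x)).
       apply in_or_app; auto. }
  rewrite length_firstn, length_permute. replace (Nat.min (k - r) k) with (k - r)%nat by lia.
  rewrite <- Hfs.
  assert (E : forall a b : list nat, a = b <-> (firstn (k - r) a = firstn (k - r) b /\ skipn (k - r) a = skipn (k - r) b)).
  { intros a b; split. intros ->; auto. intros [H1 H2]. rewrite <- (firstn_skipn (k - r) a), <- (firstn_skipn (k - r) b). congruence. }
  unfold kron.
  destruct (list_eq_dec Nat.eq_dec x w) as [Exw|Exw];
  destruct (list_eq_dec Nat.eq_dec (firstn (k - r) s) (firstn (k - r) (permute k pi x))) as [E1|E1];
  destruct (list_eq_dec Nat.eq_dec (skipn (k - r) (permute k pi x)) (skipn (k - r) s)) as [E2|E2]; try Ceq.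
  - unfold s in *; subst; congruence.
  - unfold s in *; subst; congruence.
  - unfold s in *; subst; congruence.
  - exfalso. apply Exw. apply (permute_inj k pi); auto. fold s. apply E. split; auto. Qed.

Definition shiftp (m : nat) (pi : nat -> nat) : nat -> nat :=
  fun i => if Nat.ltb i m then i else (m + pi (i - m))%nat.

Lemma shiftp_perm m k pi : is_perm k pi -> is_perm (m + k) (shiftp m pi).
Proof. intros [H1 H2]. split.
  - intros i Hi. unfold shiftp. destruct (Nat.ltb_spec i m). lia. specialize (H1 (i - m)%nat). lia.
  - intros i j Hi Hj. unfold shiftp. destruct (Nat.ltb_spec i m), (Nat.ltb_spec j m); intros He; try lia.
    assert (i - m = j - m)%nat by (apply H2; lia). lia. Qed.

Lemma permute_shiftp m k pi a u : length a = m -> length u = k ->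
  permute (m + k) (shiftp m pi) (a ++ u) = a ++ permute k pi u.
Proof. intros Ha Hu. apply nth_ext with (d := 0%nat) (d' := 0%nat).
  rewrite length_permute, length_app, length_permute; lia.
  intros i Hi. rewrite length_permute in Hi. rewrite nth_permute by auto. unfold shiftp.
  destruct (Nat.ltb_spec i m).
  - rewrite !app_nth1 by lia. auto.
  - rewrite app_nth2 by (rewrite Ha; lia). rewrite app_nth2 by (rewrite Ha; lia).
    rewrite nth_permute by lia. f_equal. rewrite Ha. lia. Qed.

Definition dl (i j : nat) : C := if Nat.eq_dec i j then C1 else C0.

Lemma Csum_dl d (f : nat -> C) j : (j < d)%nat ->
  Csum (map (fun i => Cmul (f i) (dl i j)) (seq 0 d)) = f j.
Proof. intros Hj. rewrite <- (Csum_delta Nat.eq_dec f (seq 0 d) j (seq_NoDup d 0)) by (apply in_seq; lia).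
  apply Csum_ext; intros. unfold dl. destruct (Nat.eq_dec x j). apply Cmul_1_r. apply Cmul_0_r. Qed.

Lemma Csum_dl1 d j : (j < d)%nat -> Csum (map (fun i => dl i j) (seq 0 d)) = C1.
Proof. intros Hj. rewrite <- (Csum_dl d (fun _ => C1) j Hj). apply Csum_ext; intros. rewrite Cmul_1_l; auto. Qed.

Lemma dl_sym i j : dl i j = dl j i.
Proof. unfold dl. destruct (Nat.eq_dec i j), (Nat.eq_dec j i); congruence. Qed.

Section House.
Variable d : nat.
Variable theta : vec1.
Hypothesis Hd : (0 < d)%nat.
Hypothesis Hth : unit_vec1 d theta.

Definition ha : C := theta 0%nat.
Definition ma : R := sqrt (Cn2 ha).
Definition alpha : C := if Req_EM_T ma 0 then C1 else (fst ha / ma, snd ha / ma).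
Definition hx (j : nat) : C := Cadd (theta j) (Cmul (Copp alpha) (dl j 0)).
Definition nx : R := Rsum (map (fun j => Cn2 (hx j)) (seq 0 d)).
Definition hc : R := 2 * / nx.
Definition HU (i j : nat) : C :=
  Cmul (Cconj alpha) (Cadd (dl i j) (Cmul (RtoC (- hc)) (Cmul (hx i) (Cconj (hx j))))).

Lemma ma_sq : ma * ma = Cn2 ha.
Proof. unfold ma. apply sqrt_sqrt, Cn2_nonneg. Qed.

Lemma alpha_unit : Cmul (Cconj alpha) alpha = C1.
Proof. unfold alpha. destruct (Req_EM_T ma 0). Ceq. pose proof ma_sq. unfold Cn2 in H.
  Cunf. simpl. apply injective_projections; simpl; [|field; auto]. 
  replace (fst ha / ma * (fst ha / ma) - - (snd ha / ma) * (snd ha / ma)) with ((fst ha * fst ha + snd ha * snd ha) / (ma * ma)) by (field; auto).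
  rewrite <- H. field. intro H'. apply n. nra. Qed.

Lemma alpha_ha : Cmul (Cconj ha) alpha = RtoC ma.
Proof. unfold alpha. destruct (Req_EM_T ma 0).
  - rewrite e. assert (Cn2 ha = 0). { rewrite <- ma_sq, e; ring. } apply Cn2_zero in H. rewrite H. Ceq.
  - pose proof ma_sq. unfold Cn2 in H. Cunf. simpl. apply injective_projections; simpl.
    + replace (fst ha * (fst ha / ma) - - snd ha * (snd ha / ma)) with ((fst ha * fst ha + snd ha * snd ha) / ma) by (field; auto).
      rewrite <- H. field; auto.
    + field; auto. Qed.

Lemma inner1_sum : Csum (map (fun j => Cmul (Cconj (theta j)) (theta j)) (seq 0 d)) = C1.
Proof. exact Hth. Qed.

Lemma nx_val : nx = 2 - 2 * ma.
Proof.
  assert (RtoC nx = RtoC (2 - 2 * ma)).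
  { unfold nx. rewrite <- Csum_RtoC.
    transitivity (Csum (map (fun j => Cadd (Cadd (Cmul (Cconj (theta j)) (theta j))
       (Cmul (Copp alpha) (Cmul (Cconj (theta j)) (dl j 0))))
       (Cadd (Cmul (Copp (Cconj alpha)) (Cmul (theta j) (dl j 0))) (Cmul (Cmul (Cconj alpha) alpha) (Cmul C1 (dl j 0))))) (seq 0 d))).
    { apply Csum_ext; intros j _. rewrite <- Cconj_mul_self. unfold hx.
      unfold dl; destruct (Nat.eq_dec j 0); Ceq. }
    rewrite !Csum_add, !Csum_scal. rewrite Csum_dl1 by auto.
    rewrite (Csum_dl d (fun j => Cconj (theta j)) 0) by auto. rewrite (Csum_dl d theta 0) by auto.
    rewrite inner1_sum, alpha_unit.
    pose proof alpha_ha. assert (Cmul (Cconj alpha) ha = RtoC ma).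
    { rewrite <- (Cconj_conj ha), <- Cconj_mul, Cmul_comm, H. Ceq. }
    fold ha. replace (Cmul (Copp alpha) (Cconj ha)) with (Copp (Cmul (Cconj ha) alpha)) by Ceq.
    replace (Cmul (Copp (Cconj alpha)) ha) with (Copp (Cmul (Cconj alpha) ha)) by Ceq.
    rewrite H, H0. Ceq. }
  inversion H; auto. Qed.

Lemma hc_sq : hc * hc * nx = 2 * hc.
Proof. unfold hc. destruct (Req_EM_T nx 0). rewrite e, Rinv_0. ring. field; auto. Qed.

Lemma sum_hx_sq : Csum (map (fun i => Cmul (Cconj (hx i)) (hx i)) (seq 0 d)) = RtoC nx.
Proof. unfold nx. rewrite <- Csum_RtoC. apply Csum_ext; intros. apply Cconj_mul_self. Qed.

Lemma HU_col j j' : (j < d)%nat -> (j' < d)%nat ->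
  Csum (map (fun i => Cmul (Cconj (HU i j)) (HU i j')) (seq 0 d)) = if Nat.eq_dec j j' then C1 else C0.
Proof. intros Hj Hj'.
  transitivity (Csum (map (fun i => Cadd (Cadd (Cmul (dl i j') (dl i j))
     (Cmul (Cmul (RtoC (-hc)) (Cconj (hx j'))) (Cmul (hx i) (dl i j))))
     (Cadd (Cmul (Cmul (RtoC (-hc)) (hx j)) (Cmul (Cconj (hx i)) (dl i j')))
     (Cmul (Cmul (RtoC (hc * hc)) (Cmul (hx j) (Cconj (hx j')))) (Cmul (Cconj (hx i)) (hx i))))) (seq 0 d))).
  { apply Csum_ext; intros i _. unfold HU. rewrite Cconj_mul, Cconj_conj.
    match goal with |- Cmul (Cmul alpha ?X) (Cmul (Cconj alpha) ?Y) = _ =>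
      replace (Cmul (Cmul alpha X) (Cmul (Cconj alpha) Y)) with (Cmul (Cmul (Cconj alpha) alpha) (Cmul X Y)) by Ceq end.
    rewrite alpha_unit, Cmul_1_l. rewrite Cconj_add, !Cconj_mul, Cconj_conj, Cconj_RtoC.
    replace (Cconj (dl i j)) with (dl i j) by (unfold dl; destruct Nat.eq_dec; Ceq). Ceq. }
  rewrite !Csum_add, !Csum_scal, !Csum_dl by auto. rewrite sum_hx_sq.
  replace (dl j j') with (if Nat.eq_dec j j' then C1 else C0) by (unfold dl; auto).
  match goal with |- Cadd (Cadd ?D _) _ = _ =>
    transitivity (Cadd D (Cmul (RtoC (hc * hc * nx - 2 * hc)) (Cmul (hx j) (Cconj (hx j'))))) end.
  Ceq. rewrite hc_sq. replace (2 * hc - 2 * hc) with 0 by ring. destruct (Nat.eq_dec j j'); Ceq. Qed.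

Lemma HU_row i i' : (i < d)%nat -> (i' < d)%nat ->
  Csum (map (fun j => Cmul (HU i j) (Cconj (HU i' j))) (seq 0 d)) = if Nat.eq_dec i i' then C1 else C0.
Proof. intros Hi Hi'.
  transitivity (Csum (map (fun j => Cadd (Cadd (Cmul (dl j i) (dl j i'))
     (Cmul (Cmul (RtoC (-hc)) (hx i)) (Cmul (Cconj (hx j)) (dl j i'))))
     (Cadd (Cmul (Cmul (RtoC (-hc)) (Cconj (hx i'))) (Cmul (hx j) (dl j i)))
     (Cmul (Cmul (RtoC (hc * hc)) (Cmul (hx i) (Cconj (hx i')))) (Cmul (Cconj (hx j)) (hx j))))) (seq 0 d))).
  { apply Csum_ext; intros j _. unfold HU. rewrite Cconj_mul, Cconj_conj.
    match goal with |- Cmul (Cmul (Cconj alpha) ?X) (Cmul alpha ?Y) = _ =>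
      replace (Cmul (Cmul (Cconj alpha) X) (Cmul alpha Y)) with (Cmul (Cmul (Cconj alpha) alpha) (Cmul X Y)) by Ceq end.
    rewrite alpha_unit, Cmul_1_l. rewrite Cconj_add, !Cconj_mul, Cconj_conj, Cconj_RtoC.
    replace (Cconj (dl i' j)) with (dl j i') by (unfold dl; destruct Nat.eq_dec, Nat.eq_dec; try Ceq; congruence).
    rewrite (dl_sym i j). Ceq. }
  rewrite !Csum_add, !Csum_scal, !Csum_dl by auto. rewrite sum_hx_sq.
  replace (dl i' i) with (if Nat.eq_dec i i' then C1 else C0) by (unfold dl; destruct (Nat.eq_dec i' i), (Nat.eq_dec i i'); congruence).
  match goal with |- Cadd (Cadd ?D _) _ = _ =>
    transitivity (Cadd D (Cmul (RtoC (hc * hc * nx - 2 * hc)) (Cmul (hx i) (Cconj (hx i'))))) end.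
  Ceq. rewrite hc_sq. replace (2 * hc - 2 * hc) with 0 by ring. destruct (Nat.eq_dec i i'); Ceq. Qed.

Lemma Cconj_dl i j : Cconj (dl i j) = dl j i.
Proof. unfold dl. destruct (Nat.eq_dec i j), (Nat.eq_dec j i); try congruence; Ceq. Qed.

Lemma HU_0 j : (j < d)%nat -> Cconj (HU 0 j) = theta j.
Proof. intros Hj. unfold HU. rewrite !Cconj_mul, Cconj_add, !Cconj_mul, Cconj_conj, Cconj_RtoC, Cconj_conj, Cconj_dl.
  assert (Eth : theta j = Cadd (hx j) (Cmul alpha (dl j 0))) by (unfold hx; Ceq).
  destruct (Req_EM_T nx 0) as [Hn|Hn].
  - assert (Hx0 : forall i, (i < d)%nat -> hx i = C0).
    { intros i Hi. apply Cn2_zero. apply Rle_antisym; [|apply Cn2_nonneg]. rewrite <- Hn. unfold nx.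
      apply (Rsum_in (fun j => Cn2 (hx j))). intros; apply Cn2_nonneg. apply in_seq; lia. }
    rewrite Eth, (Hx0 0%nat Hd), (Hx0 j Hj). Ceq.
  - assert (Hx0 : Cmul (Cmul (Cconj (hx 0)) alpha) (RtoC hc) = Copp C1).
    { unfold hx, dl. destruct (Nat.eq_dec 0 0); [|lia]. fold ha.
      rewrite Cconj_add, Cmul_add_distr_r. rewrite alpha_ha.
      replace (Cmul (Cconj (Cmul (Copp alpha) C1)) alpha) with (Copp (Cmul (Cconj alpha) alpha)) by Ceq.
      rewrite alpha_unit. unfold hc. rewrite nx_val in *. Cunf. simpl. apply injective_projections; simpl; field; lra. }
    transitivity (Cadd (Cmul alpha (dl j 0)) (Cmul (Copp (Cmul (Cmul (Cconj (hx 0)) alpha) (RtoC hc))) (hx j))).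
    Ceq. rewrite Hx0, Eth. Ceq. Qed.
End House.

Lemma inner_scal d k a b u v : inner d k (fun x => Cmul a (u x)) (fun x => Cmul b (v x)) =
  Cmul (Cmul (Cconj a) b) (inner d k u v).
Proof. unfold inner. rewrite <- Csum_scal. apply Csum_ext; intros. rewrite Cconj_mul. Ceq. Qed.

Lemma inner_ext d k u u' v v' : (forall x, In x (words d k) -> u x = u' x) ->
  (forall x, In x (words d k) -> v x = v' x) -> inner d k u v = inner d k u' v'.
Proof. intros H1 H2. unfold inner. apply Csum_ext; intros. rewrite H1, H2; auto. Qed.

Lemma tpow_app th a u : tpow th (a ++ u) = Cmul (tpow th a) (tpow th u).
Proof. unfold tpow. rewrite map_app. induction (map th a); simpl. rewrite Cmul_1_l; auto.
  rewrite IHl. apply Cmul_assoc. Qed.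

Lemma tpow_unit d k th : unit_vec1 d th -> inner d k (tpow th) (tpow th) = C1.
Proof. intros H. induction k. unfold inner; simpl. unfold tpow; simpl. Ceq.
  rewrite inner_S. transitivity (Csum (map (fun i => Cmul (Cmul (Cconj (th i)) (th i)) (inner d k (tpow th) (tpow th))) (seq 0 d))).
  apply Csum_ext; intros. unfold inner. rewrite <- Csum_scal. apply Csum_ext; intros.
  unfold tpow; simpl. rewrite Cconj_mul. Ceq.
  rewrite IHk, Csum_scal_r, Cmul_1_r. apply H. Qed.

Lemma exp_pow_INR a m : exp a ^ m = exp (a * INR m).
Proof. induction m. simpl. rewrite Rmult_0_r, exp_0; auto.
  rewrite S_INR. simpl. rewrite IHm, <- exp_plus. f_equal. ring. Qed.

Lemma one_minus_le_exp x : 1 - x <= exp (- x).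
Proof. destruct (Req_dec x 0). subst. rewrite Ropp_0, exp_0. lra.
  pose proof (exp_ineq1 (- x)). lra. Qed.

Lemma d_pos d th : unit_vec1 d th -> (0 < d)%nat.
Proof. intros H. destruct d. unfold unit_vec1, inner1 in H. simpl in H. unfold C0, C1 in H. inversion H. lra. lia. Qed.

Lemma Tadj_tpow d U th k z : (0 < d)%nat -> (forall j, (j < d)%nat -> Cconj (U 0%nat j) = th j) ->
  In z (words d k) -> Tadj d U k (tpow e0) z = tpow th z.
Proof. intros Hd U0 Hz.
  assert (Hl : length z = k) by (apply words_In in Hz; tauto).
  transitivity (Tadj d U k (tpow_tensor k e0 (fun _ => C1)) z).
  { apply Tadj_ext. intros w Hw. assert (length w = k) by (apply words_In in Hw; tauto).
    unfold tpow_tensor. rewrite firstn_all2, Cmul_1_r by lia. auto. }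
  rewrite (Tadj_tpow_tensor d U th U0 k k) by (auto; lia).
  unfold tpow_tensor. rewrite firstn_all2 by lia. rewrite Nat.sub_diag.
  unfold Tadj; simpl. unfold tpow. Ceq. Qed.

Lemma inner_tpow_split d m k Psi th :
  inner d (m + k) Psi (tpow th) = inner d k (contr d th m Psi) (tpow th).
Proof. unfold inner, contr. rewrite Csum_words_app.
  transitivity (Csum (map (fun u => Csum (map (fun a => Cmul (Cmul (Cconj (Cconj (tpow th a))) (Cconj (Psi (a ++ u)))) (tpow th u)) (words d m))) (words d k))).
  2: { apply Csum_ext; intros. rewrite Csum_conj, Csum_scal_r. f_equal. apply Csum_ext; intros. rewrite Cconj_mul; auto. }
  rewrite Csum_swap. apply Csum_ext; intros. apply Csum_ext; intros. rewrite tpow_app, Cconj_conj. Ceq. Qed.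

Theorem lemma2 (d n : nat) (Psi : vec) (theta : vec1)
  (HPsi : unit_vec d n Psi) (Hsym : symmetric d n Psi)
  (Htheta : unit_vec1 d theta)
  (Hov : inner d n Psi (tpow theta) <> C0) :
  forall m : nat, (m <= n)%nat ->
  exists Psi_nm : vec,
    unit_vec d (n - m) Psi_nm /\
    loewner_le d (n - m) (proj Psi_nm)
      (Oscale (/ (Cmod (inner d n Psi (tpow theta)) ^ 2)) (ptrace d m (proj Psi))) /\
    forall r : nat, (r <= n - m)%nat ->
    exists Psi_nmr : vec,
      unit_vec d (n - m) Psi_nmr /\
      almost_power d (n - m) r theta Psi_nmr /\
      exists t : R, is_trnorm d (n - m) (Osub (proj Psi_nm) (proj Psi_nmr)) t /\
        t <= 2 * sqrt 2 * / Cmod (inner d n Psi (tpow theta))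
               * exp (- (INR m * INR r) / (2 * INR n)).
Proof.
  intros m Hm.
  assert (Hd : (0 < d)%nat) by (eapply d_pos; eauto).
  remember (n - m)%nat as k eqn:Hk. assert (Hn : n = (m + k)%nat) by lia. subst n. clear Hk.
  set (c := inner d (m + k) Psi (tpow theta)) in *.
  assert (Hc : 0 < Cn2 c) by (apply Cn2_pos; auto).
  rewrite Cmod_sq. 
  set (U := HU d theta).
  pose proof (HU_col d theta) as Ucol.
  pose proof (HU_row d theta) as Urow.
  pose proof (HU_0 d theta Hd Htheta) as U0.
  fold U in Ucol, Urow, U0.
  set (phi := contr d theta m Psi).
  set (N2 := Rsum (map (fun u => Cn2 (phi u)) (words d k))).
  assert (HK2 : inner d k (tpow theta) (tpow theta) = C1) by (apply tpow_unit; auto).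
  assert (HK2' : Rsum (map (fun u => Cn2 (tpow theta u)) (words d k)) = 1).
  { rewrite inner_self in HK2. unfold C1, RtoC in HK2. inversion HK2; auto. }
  assert (Hcphi : inner d k phi (tpow theta) = c) by (unfold c, phi; symmetry; apply inner_tpow_split).
  assert (HN2c : Cn2 c <= N2).
  { rewrite <- Hcphi. unfold inner. pose proof (CS phi (tpow theta) (words d k)). fold N2 in H.
    rewrite HK2' in H. lra. }
  assert (HN2 : 0 < N2) by lra.
  set (N := sqrt N2).
  assert (HN : 0 < N) by (apply sqrt_lt_R0; auto).
  assert (HNN : N * N = N2) by (apply sqrt_sqrt; lra).
  set (Psi_nm := fun u => Cmul (RtoC (/ N)) (phi u)).
  assert (HPnm : unit_vec d k Psi_nm).
  { unfold unit_vec, Psi_nm. rewrite inner_scal, inner_self. fold N2.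
    Cunf. simpl. apply injective_projections; simpl; [|ring]. rewrite <- HNN. field. lra. }
  exists Psi_nm. split; [exact HPnm|split].
  - intros x. rewrite qform_sub, qform_scale, qform_ptrace, qform_proj.
    set (G := Rsum (map (fun a => Cn2 (inner d k x (fun u => Psi (a ++ u)))) (words d m))).
    assert (HG : 0 <= G) by (apply Rsum_nonneg; intros; apply Cn2_nonneg).
    assert (Hxp : inner d k x phi = Csum (map (fun a => Cmul (Cconj (tpow theta a)) (inner d k x (fun u => Psi (a ++ u)))) (words d m))).
    { unfold inner, phi, contr. 
      transitivity (Csum (map (fun u => Csum (map (fun a => Cmul (Cconj (tpow theta a)) (Cmul (Cconj (x u)) (Psi (a ++ u)))) (words d m))) (words d k))).
      apply Csum_ext; intros. rewrite <- Csum_scal. apply Csum_ext; intros. Ceq.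
      rewrite Csum_swap. apply Csum_ext; intros. rewrite Csum_scal; auto. }
    assert (HCS : Cn2 (inner d k x phi) <= G).
    { rewrite Hxp. pose proof (CS (tpow theta) (fun a => inner d k x (fun u => Psi (a ++ u))) (words d m)).
      assert (Rsum (map (fun u => Cn2 (tpow theta u)) (words d m)) = 1).
      { pose proof (tpow_unit d m theta Htheta) as H1. rewrite inner_self in H1. unfold C1, RtoC in H1. inversion H1; auto. }
      rewrite H0 in H. fold G in H. lra. }
    assert (Hx : inner d k x Psi_nm = Cmul (RtoC (/ N)) (inner d k x phi)).
    { unfold Psi_nm, inner. rewrite <- Csum_scal. apply Csum_ext; intros. Ceq. }
    rewrite Hx, Cn2_mul, Cn2_RtoC.
    assert (/ N * / N * Cn2 (inner d k x phi) <= / Cn2 c * G).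
    { replace (/ N * / N) with (/ N2) by (rewrite <- HNN; field; lra).
      apply Rle_trans with (/ N2 * G). apply Rmult_le_compat_l; auto. left; apply Rinv_0_lt_compat; auto.
      apply Rmult_le_compat_r; auto. apply Rinv_le_contravar; auto. }
    unfold Csub, Cim, Cre, Cmul, Cadd, Copp, RtoC; simpl. split; [ring | lra].
  - intros r Hr.
    assert (Happ : forall a u, In a (words d m) -> In u (words d k) -> In (a ++ u) (words d (m + k))).
    { intros a u Ha Hu. apply words_In in Ha, Hu. apply words_In. rewrite length_app. split. lia.
      intros z Hz. apply in_app_or in Hz. destruct Hz; [apply Ha|apply Hu]; auto. }
    set (Psi' := T d U (m + k) Psi).
    assert (HPsym : symmetric d (m + k) Psi') by (apply T_symmetric; auto).
    assert (HPunit : inner d (m + k) Psi' Psi' = C1) by (unfold Psi'; rewrite (inner_T d U Ucol); auto).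
    set (phi' := fun u => Psi' (repeat 0%nat m ++ u)).
    assert (Hphi' : forall u, In u (words d k) -> T d U k phi u = phi' u).
    { intros; unfold phi, phi', Psi'; apply T_contr; auto. }
    set (Q := fun u => if Nat.leb (nz u) r then phi' u else C0).
    set (q2 := Rsum (map (fun u => Cn2 (Q u)) (words d k))).
    set (eps2 := Rsum (map (fun u => if Nat.ltb r (nz u) then Cn2 (phi' u) else 0) (words d k))).
    assert (HN2s : N2 = q2 + eps2).
    { assert (inner d k phi phi = inner d k phi' phi').
      { rewrite <- (inner_T d U Ucol). apply inner_ext; auto. }
      rewrite !inner_self in H. unfold RtoC in H. inversion H. fold N2 in H1. rewrite H1.
      unfold q2, eps2. rewrite <- Rsum_add. apply Rsum_ext. intros u _. unfold Q.
      destruct (Nat.leb_spec (nz u) r), (Nat.ltb_spec r (nz u)); try lia. unfold C0, Cn2; simpl; ring.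
      unfold C0, Cn2; simpl; ring. }
    assert (Hc' : Cn2 (Psi' (repeat 0%nat (m + k))) = Cn2 c).
    { assert (inner d (m + k) Psi' (tpow e0) = c).
      { unfold Psi'. rewrite <- inner_adj. unfold c. apply inner_ext; auto. intros. apply Tadj_tpow; auto. }
      assert (inner d (m + k) Psi' (tpow e0) = Cconj (Psi' (repeat 0%nat (m + k)))).
      { unfold inner. rewrite <- (Csum_kron_l d (m + k) (fun w => Cconj (Psi' w)) (repeat 0%nat (m + k))) by (apply repeat_words; auto).
        apply Csum_ext. intros w Hw. assert (length w = (m + k)%nat) by (apply words_In in Hw; tauto).
        rewrite (tpow_e0 d). rewrite H0; auto. rewrite H0; auto. }
      rewrite <- H, H0, Cn2_conj; auto. }
    assert (Hq2 : 0 < q2).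
    { apply Rlt_le_trans with (Cn2 (Q (repeat 0%nat k))).
      unfold Q. rewrite nz_repeat0. simpl. unfold phi'. rewrite <- repeat_app, Hc'. auto.
      apply (Rsum_in (fun u => Cn2 (Q u))). intros; apply Cn2_nonneg. apply repeat_words; auto. }
    set (q := sqrt q2).
    assert (Hq : 0 < q) by (apply sqrt_lt_R0; auto).
    assert (Hqq : q * q = q2) by (apply sqrt_sqrt; lra).
    set (Psi_nmr := fun x => Cmul (RtoC (/ q)) (Tadj d U k Q x)).
    assert (HPnmr : unit_vec d k Psi_nmr).
    { unfold unit_vec, Psi_nmr. rewrite inner_scal, (inner_Tadj d U Urow), inner_self. fold q2.
      Cunf. simpl. apply injective_projections; simpl; [|ring]. rewrite <- Hqq. field. lra. }
    exists Psi_nmr. split; [exact HPnmr|split].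
    + split.
      * assert (HQsym : symmetric d k Q).
        { intros pi Hp u Hu. assert (Hul : length u = k) by (apply words_In in Hu; tauto).
          unfold Pperm, Q. rewrite (nz_perm _ u (permute_Permutation k pi u Hp Hul)).
          assert (Hpe : phi' (permute k pi u) = phi' u).
          { unfold phi'. rewrite <- (permute_shiftp m k pi (repeat 0%nat m) u) by (rewrite ?repeat_length; auto).
            pose proof (HPsym (shiftp m pi) (shiftp_perm m k pi Hp) (repeat 0%nat m ++ u) (Happ _ _ (repeat_words d m Hd) Hu)) as H.
            unfold Pperm in H. auto. }
          rewrite Hpe; auto. }
        intros pi Hp w Hw. unfold Pperm, Psi_nmr. pose proof (Tadj_symmetric d U k Q HQsym pi Hp w Hw) as H.
        unfold Pperm in H. rewrite H. auto.
      * exists (map (fun w => (Cmul (RtoC (/ q)) (phi' w), Tadj d U k (fun x => kron x w))) (filter (fun w => Nat.leb (nz w) r) (words d k))).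
        split.
        -- intros p Hp. apply in_map_iff in Hp. destruct Hp as [w [<- Hw]]. apply filter_In in Hw.
           destruct Hw as [Hw Hle]. apply Nat.leb_le in Hle. simpl.
           destruct (sort_perm d k r w Hd Hw Hle Hr) as [pi [psi0 [Hpi Hkr]]].
           exists pi, (Tadj d U (k - (k - r)) psi0). split; auto.
           intros x Hx.
           transitivity (Tadj d U k (Pperm k pi (tpow_tensor (k - r) e0 psi0)) x).
           { apply Tadj_ext. intros y Hy. unfold Pperm. apply Hkr; auto. }
           rewrite Tadj_Pperm by auto. unfold Pperm. apply Tadj_tpow_tensor; auto. lia. apply permute_words; auto.
        -- intros x Hx. rewrite map_map. simpl. unfold Psi_nmr, Tadj at 1.
           transitivity (Csum (map (fun w => Cmul (Cmul (RtoC (/ q)) (phi' w)) (Cconj (pr U w x))) (filter (fun w => Nat.leb (nz w) r) (words d k)))).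
           2: { apply Csum_ext. intros w Hw. apply filter_In in Hw. destruct Hw as [Hw _]. f_equal.
                unfold Tadj. rewrite (Csum_kron d k (fun y => Cconj (pr U y x)) w Hw). auto. }
           rewrite Csum_filter, <- Csum_scal. apply Csum_ext. intros y _. unfold Q.
           destruct (Nat.leb (nz y) r); Ceq.
    + set (E := exp (- (INR m * INR r) / (2 * INR (m + k)))).
      assert (HE0 : 0 < E) by apply exp_pos.
      set (g := fun w => Cn2 (Psi' w)).
      assert (Hg0 : forall w, 0 <= g w) by (intros; apply Cn2_nonneg).
      assert (Hgsym : forall j i w, (j < m + k)%nat -> (i < m + k)%nat -> In w (words d (m + k)) ->
        g (permute (m + k) (tau j i) w) = g w).
      { intros j i w Hj Hi Hw. unfold g. pose proof (HPsym (tau j i) (tau_perm _ j i Hj Hi) w Hw) as H.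
        unfold Pperm in H. rewrite H; auto. }
      assert (HepsB : eps2 = Bj d (m + k) r g m).
      { unfold Bj. rewrite Rsum_words_app.
        transitivity (Rsum (map (fun a => if list_eq_dec Nat.eq_dec a (repeat 0%nat m) then
           Rsum (map (fun u => if Nat.ltb r (nz (a ++ u)) then g (a ++ u) else 0) (words d k)) else 0) (words d m))).
        2: { apply Rsum_ext. intros a Ha. assert (Hal : length a = m) by (apply words_In in Ha; tauto).
             destruct (list_eq_dec Nat.eq_dec a (repeat 0%nat m)) as [->|Hne].
             - apply Rsum_ext; intros u _. rewrite fz_app0. auto.
             - transitivity (Rsum (map (fun _ => 0) (words d k))). rewrite Rsum_const; ring.
               apply Rsum_ext; intros u _.
               assert (Hf : fz m (a ++ u) = fz m a).
               { unfold fz. apply forallb_ext_in'. intros i Hi. apply in_seq in Hi. rewrite app_nth1 by lia. auto. }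
               rewrite Hf. destruct (fz m a) eqn:Hfa. exfalso. apply Hne. apply (fz_words d); auto. auto. }
        rewrite (Rsum_delta (list_eq_dec Nat.eq_dec) (fun a => Rsum (map (fun u => if Nat.ltb r (nz (a ++ u)) then g (a ++ u) else 0) (words d k))))
          by (auto using words_NoDup, repeat_words).
        unfold eps2. apply Rsum_ext; intros u _. rewrite nz_app, nz_repeat0. simpl. auto. }
      assert (HB0 : Bj d (m + k) r g 0 <= 1).
      { unfold Bj. apply Rle_trans with (Rsum (map g (words d (m + k)))).
        apply Rsum_le. intros. destruct (_ && _); auto. lra.
        rewrite inner_self in HPunit. unfold RtoC, C1 in HPunit. inversion HPunit. unfold g. lra. }
      assert (HepsE : eps2 <= E * E).
      { destruct m as [|m'].
        - unfold E. replace (- (INR 0 * INR r) / (2 * INR (0 + k))) with 0 by (simpl; unfold Rdiv; ring).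
          rewrite exp_0. rewrite HepsB. lra.
        - set (n := (S m' + k)%nat) in *.
          assert (Hnpos : 0 < INR n) by (apply lt_0_INR; unfold n; lia).
          assert (HSr : (S r <= n)%nat) by (unfold n; lia).
          pose proof (Bj_pow d n r g Hg0 Hgsym (S m') HSr ltac:(unfold n; lia)) as HBp.
          set (rho := 1 - INR (S r) / INR n) in *.
          assert (Hrho0 : 0 <= rho).
          { unfold rho. assert (INR (S r) <= INR n) by (apply le_INR; auto).
            assert (INR (S r) / INR n <= 1). { unfold Rdiv. apply Rmult_le_reg_r with (INR n); auto.
              rewrite Rmult_assoc, Rinv_l; lra. } lra. }
          assert (Hrho : rho <= exp (- (INR r / INR n))).
          { apply Rle_trans with (exp (- (INR (S r) / INR n))). apply one_minus_le_exp.
            rewrite S_INR. destruct (Req_dec (INR r + 1) (INR r + 1)); [|lra].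
            assert (- ((INR r + 1) / INR n) <= - (INR r / INR n)).
            { unfold Rdiv. apply Ropp_le_contravar. apply Rmult_le_compat_r. left; apply Rinv_0_lt_compat; auto. lra. }
            destruct H0. left; apply exp_increasing; auto. rewrite H0; lra. }
          assert (Hpow : rho ^ S m' <= exp (- (INR r / INR n)) ^ S m') by (apply pow_incr; auto).
          rewrite exp_pow_INR in Hpow.
          assert (HEE : E * E = exp (- (INR r / INR n) * INR (S m'))).
          { unfold E. rewrite <- exp_plus. f_equal. fold n. field. lra. }
          rewrite HEE, HepsB. apply Rle_trans with (rho ^ S m' * Bj d n r g 0); auto.
          apply Rle_trans with (rho ^ S m'). 
          assert (0 <= rho ^ S m') by (apply pow_le; auto).
          assert (0 <= Bj d n r g 0) by (apply Bj_nonneg; auto). nra. auto. }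
      exists (2 * sqrt (1 - Cn2 (inner d k Psi_nm Psi_nmr))). split.
      { apply trnorm_pure; auto. }
      assert (Hs : inner d k Psi_nm Psi_nmr = RtoC (/ N * / q * q2)).
      { unfold Psi_nm, Psi_nmr. rewrite inner_scal. rewrite (inner_adj d U).
        assert (inner d k (T d U k phi) Q = RtoC q2).
        { transitivity (inner d k phi' Q). apply inner_ext; auto. unfold inner, q2. rewrite <- Csum_RtoC.
          apply Csum_ext. intros u _. unfold Q. destruct (Nat.leb (nz u) r). apply Cconj_mul_self. unfold Cn2; Ceq. }
        rewrite H. Ceq. }
      rewrite Hs, Cn2_RtoC. rewrite <- Hqq.
      assert (Heps : eps2 = N * N - q * q) by lra.
      replace (1 - / N * / q * (q * q) * (/ N * / q * (q * q))) with (eps2 / (N * N)) by (rewrite Heps; field; lra).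
      rewrite sqrt_div_alt by nra. rewrite sqrt_square by lra.
      assert (Heps0 : 0 <= eps2) by (unfold eps2; apply Rsum_nonneg; intros; destruct Nat.ltb; [apply Cn2_nonneg|lra]).
      assert (HsE : sqrt eps2 <= E) by (rewrite <- (sqrt_square E) by lra; apply sqrt_le_1_alt; auto).
      assert (Hcm : 0 < Cmod c) by (rewrite Cmod_Cn2; apply sqrt_lt_R0; auto).
      assert (HcN : Cmod c <= N) by (rewrite Cmod_Cn2; apply sqrt_le_1_alt; auto).
      assert (Hs2 : 1 <= sqrt 2) by (rewrite <- sqrt_1; apply sqrt_le_1_alt; lra).
      assert (sqrt eps2 / N <= E * / Cmod c).
      { unfold Rdiv. apply Rmult_le_compat; auto. apply sqrt_pos. left; apply Rinv_0_lt_compat; auto.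
        apply Rinv_le_contravar; auto. }
      assert (0 < / Cmod c) by (apply Rinv_0_lt_compat; auto).
      assert (0 <= (sqrt 2 - 1) * (E * / Cmod c)) by (apply Rmult_le_pos; nra).
      replace (2 * sqrt 2 * / Cmod c * E) with (2 * (E * / Cmod c) + 2 * ((sqrt 2 - 1) * (E * / Cmod c))) by ring.
      lra.
Qed.
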